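(* Let $L>0$, and let $V\in C^1([0,L];\mathbb{R})$ and, for each $\varepsilon\in(0,1]$, $V_\varepsilon\in C^1([0,L];\mathbb{R})$ with $\|V-V_\varepsilon\|_{C^1([0,L])}\to0$ as $\varepsilon\to0^+$. Assume that the only point $x\in[0,L]$ with $V'(x)=0$ is $x=\mathbf{x}_0\in(0,L)$, and $V(\mathbf{x}_0)=\min_{[0,L]}V$. Then for any interval $U\subset[0,L]$ with nonempty interior and any $\delta>0$ there is $\varepsilon_0>0$ such that for all $\varepsilon\in(0,\varepsilon_0)$, all $E\in\mathbb{R}$ and all $\psi$ satisfying $$-\varepsilon^2\psi''+V_\varepsilon\psi=E\psi,\qquad \psi\in H^2(0,L)\cap H^1_0(0,L),\qquad \|\psi\|_{L^2(0,L)}=1,$$ we have $$\|\psi\|_{L^2(U)}\ge e^{-\frac1\varepsilon(d_{A,E}(U)+\delta)},\qquad d_{A,E}(U)=\inf_{x\in U}d_{A,E}(x),$$ and $$\frac{\varepsilon}{\sqrt{|E|+1}}|\psi'(0)|\ge e^{-\frac1\varepsilon(d_{A,E}(0)+\delta)},\qquad \frac{\varepsilon}{\sqrt{|E|+1}}|\psi'(L)|\ge e^{-\frac1\varepsilon(d_{A,E}(L)+\delta)}.$$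
   Context: Let $E_0=\min_{[0,L]}V=V(\mathbf{x}_0)$. For $E\ge E_0$ let $K_E=\{x\in[0,L]: V(x)\le E\}$ and define the Agmon distance $d_{A,E}(x)=\inf_{y\in K_E}\left|\int_y^x\sqrt{(V(s)-E)_+}\,ds\right|$, where $(t)_+=\max(t,0)$. For $E<E_0$, set by convention $d_{A,E}:=d_{A,E_0}$. *)

(* Defs.v *)
From Stdlib Require Import Reals.
From Coquelicot Require Import Coquelicot.
Open Scope R_scope.

(* f is C^1 on [0,L] with derivative f' (f, f' given on R; only their
   restriction to [0,L] matters: derivative at the endpoints is that of a
   C^1 extension, i.e. the one-sided derivative). *)
Definition C1_on (L : R) (f f' : R -> R) : Prop :=
  (forall x, 0 <= x <= L -> is_derive f x (f' x)) /\
  (forall x, 0 <= x <= L -> forall eta, 0 < eta -> exists rho, 0 < rho /\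
     forall y, 0 <= y <= L -> Rabs (y - x) < rho -> Rabs (f' y - f' x) < eta).

Definition agmon_int (V : R -> R) (E y x : R) : R :=
  Rabs (RInt (fun s => sqrt (Rmax (V s - E) 0)) y x).

(* Agmon distance d_{A,E}(x), with E_0 = V x0 = min V, and the convention
   d_{A,E} := d_{A,E_0} for E < E_0 (implemented via Rmax E E_0). *)
Definition agmon_dist (L : R) (V : R -> R) (x0 E x : R) : R :=
  let E' := Rmax E (V x0) in
  real (Glb_Rbar (fun r => exists y, 0 <= y <= L /\ V y <= E' /\
                                     r = agmon_int V E' y x)).

Definition agmon_dist_set (L : R) (V : R -> R) (x0 E : R) (U : R -> Prop) : R :=
  real (Glb_Rbar (fun r => exists x, U x /\ r = agmon_dist L V x0 E x)).

(* Main.v *)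
Require Import Defs.
From Stdlib Require Import Reals Lra Psatz Classical.
From Coquelicot Require Import Coquelicot.
Open Scope R_scope.



Lemma deriv_cont (f : R -> R) (x l : R) : is_derive f x l -> continuity_pt f x.
Proof. intro H. apply continuity_pt_filterlim. apply (@ex_derive_continuous R_AbsRing R_NormedModule f x). exists l; exact H. Qed.

Lemma deriv_contc (f : R -> R) (x l : R) : is_derive f x l -> continuous f x.
Proof. intro H. apply (@ex_derive_continuous R_AbsRing R_NormedModule f x). exists l; exact H. Qed.

Definition clamp (L x : R) := Rmax 0 (Rmin L x).

Lemma clamp_id L x : 0 <= x <= L -> clamp L x = x.
Proof. intros [h1 h2]. unfold clamp. rewrite Rmin_right by lra. rewrite Rmax_right; lra. Qed.

Lemma clamp_in L x : 0 <= L -> 0 <= clamp L x <= L.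
Proof. intro h. unfold clamp. unfold Rmax, Rmin. repeat destruct Rle_dec; lra. Qed.

Lemma clamp_lip L x y : 0 <= L -> Rabs (clamp L x - clamp L y) <= Rabs (x - y).
Proof. intro h. unfold clamp, Rmax, Rmin. repeat destruct Rle_dec; unfold Rabs; repeat destruct Rcase_abs; lra. Qed.

Lemma clamp_cont_ed (L : R) (f : R -> R) : 0 <= L ->
  (forall x, 0 <= x <= L -> forall eta, 0 < eta -> exists rho, 0 < rho /\
     forall y, 0 <= y <= L -> Rabs (y - x) < rho -> Rabs (f y - f x) < eta) ->
  forall c, continuity_pt (fun x => f (clamp L x)) c.
Proof.
  intros hL H c. unfold continuity_pt, continue_in, limit1_in, limit_in.
  intros eps heps. destruct (H (clamp L c) (clamp_in L c hL) eps heps) as [rho [hr H2]].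
  exists rho. split; [exact hr|]. intros x [_ hx]. simpl in *. unfold R_dist in *.
  apply H2. apply clamp_in; auto. eapply Rle_lt_trans; [apply clamp_lip; auto| exact hx].
Qed.

Lemma clamp_cont (L : R) (f : R -> R) : 0 <= L ->
  (forall x, 0 <= x <= L -> continuity_pt f x) ->
  forall c, continuity_pt (fun x => f (clamp L x)) c.
Proof.
  intros hL H. apply clamp_cont_ed; auto. intros x hx eta heta.
  specialize (H x hx). unfold continuity_pt, continue_in, limit1_in, limit_in in H.
  destruct (H eta heta) as [rho [hr H2]]. exists rho; split; auto.
  intros y hy hyx. destruct (Req_dec y x) as [->|hne].
  - rewrite Rminus_diag, Rabs_R0; auto.
  - apply (H2 y). split. split. exact I. intro e; apply hne; auto. simpl. unfold R_dist. exact hyx.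
Qed.

Lemma monot_of_deriv (h dh : R -> R) p q : p <= q ->
  (forall s, p <= s <= q -> is_derive h s (dh s) /\ 0 <= dh s) -> h p <= h q.
Proof.
  intros hpq H.
  destruct (MVT_gen h p q dh) as [c [hc e]].
  - intros x hx. rewrite Rmin_left, Rmax_right in hx by lra. apply H; lra.
  - intros x hx. rewrite Rmin_left, Rmax_right in hx by lra. apply (deriv_cont h x (dh x)). apply H; lra.
  - rewrite Rmin_left, Rmax_right in hc by lra. destruct (H c hc) as [_ h2].
    assert (0 <= dh c * (q - p)) by (apply Rmult_le_pos; lra). lra.
Qed.

Lemma gron (A dA Phi phi : R -> R) p q : p <= q ->
 (forall s, p <= s <= q -> is_derive A s (dA s) /\ is_derive Phi s (phi s) /\ Rabs (dA s) <= phi s * A s) ->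
 A p * exp (-(Phi q - Phi p)) <= A q /\ A q * exp (-(Phi q - Phi p)) <= A p.
Proof.
  intros hpq H. split.
  - assert (M : (fun s => A s * exp (Phi s)) p <= (fun s => A s * exp (Phi s)) q).
    { apply (monot_of_deriv (fun s => A s * exp (Phi s)) (fun s => dA s * exp (Phi s) + A s * (exp (Phi s) * phi s)) p q hpq).
      intros s hs. destruct (H s hs) as [d1 [d2 d3]]. split.
      - apply is_derive_Reals. apply is_derive_Reals in d1. apply is_derive_Reals in d2.
        apply (derivable_pt_lim_mult A (fun s => exp (Phi s))); auto.
        apply (derivable_pt_lim_comp Phi exp); auto. apply derivable_pt_lim_exp.
      - assert (0 < exp (Phi s)) by apply exp_pos.
        assert (- (phi s * A s) <= dA s) by (apply Rabs_le_between' in d3 || idtac; unfold Rabs in d3; destruct Rcase_abs in d3; lra).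
        nra. }
    simpl in M.
    assert (e : exp (-(Phi q - Phi p)) * exp (Phi q) = exp (Phi p)).
    { rewrite <- exp_plus. f_equal. ring. }
    assert (0 < exp (Phi q)) by apply exp_pos.
    apply (Rmult_le_reg_r (exp (Phi q))); auto. rewrite Rmult_assoc, e. exact M.
  - assert (M : (fun s => A s * exp (- Phi s)) q <= (fun s => A s * exp (- Phi s)) p).
    { assert (M2 : (fun s => - (A s * exp (- Phi s))) p <= (fun s => - (A s * exp (- Phi s))) q).
      { apply (monot_of_deriv (fun s => - (A s * exp (- Phi s))) (fun s => - (dA s * exp (- Phi s) + A s * (exp (- Phi s) * (- phi s)))) p q hpq).
        intros s hs. destruct (H s hs) as [d1 [d2 d3]]. split.
        - apply is_derive_Reals. apply is_derive_Reals in d1. apply is_derive_Reals in d2.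
          apply (derivable_pt_lim_opp (fun s => A s * exp (- Phi s))).
          apply (derivable_pt_lim_mult A (fun s => exp (- Phi s))); auto.
          apply (derivable_pt_lim_comp (fun s => - Phi s) exp); auto.
          apply (derivable_pt_lim_opp Phi); auto. apply derivable_pt_lim_exp.
        - assert (0 < exp (- Phi s)) by apply exp_pos.
          assert (dA s <= phi s * A s) by (unfold Rabs in d3; destruct Rcase_abs in d3; lra).
          nra. }
      simpl in M2. simpl. lra. }
    simpl in M.
    assert (e : exp (-(Phi q - Phi p)) * exp (- Phi p) = exp (- Phi q)).
    { rewrite <- exp_plus. f_equal. ring. }
    assert (0 < exp (- Phi p)) by apply exp_pos.
    apply (Rmult_le_reg_r (exp (- Phi p))); auto. rewrite Rmult_assoc, e. exact M.
Qed.
Lemma mvt_in L V dV p q : C1_on L V dV -> 0 <= p -> p <= q -> q <= L ->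
  exists c, p <= c <= q /\ V q - V p = dV c * (q - p).
Proof.
  intros [HD _] h1 h2 h3.
  destruct (MVT_gen V p q dV) as [c [hc e]].
  - intros x hx. rewrite Rmin_left, Rmax_right in hx by lra. apply HD; lra.
  - intros x hx. rewrite Rmin_left, Rmax_right in hx by lra. apply (deriv_cont V x (dV x)). apply HD; lra.
  - rewrite Rmin_left, Rmax_right in hc by lra. exists c; auto.
Qed.

Lemma V_mono (L : R) V dV x0 : 0 < L -> C1_on L V dV -> 0 < x0 < L ->
  (forall x, 0 <= x <= L -> (dV x = 0 <-> x = x0)) -> (forall x, 0 <= x <= L -> V x0 <= V x) ->
  (forall p q, 0 <= p -> p <= q -> q <= x0 -> V q <= V p) /\
  (forall p q, x0 <= p -> p <= q -> q <= L -> V p <= V q).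
Proof.
  intros hL HV hx0 Hcrit Hmin.
  assert (Hg : continuity (fun x => - dV (clamp L x))).
  { intro c. apply continuity_pt_opp. apply (clamp_cont_ed L dV); [lra| apply HV]. }
  split.
  - intros p q h1 h2 h3. destruct (Rle_lt_dec (V q) (V p)) as [ok|bad]; [exact ok|exfalso].
    destruct (mvt_in L V dV p q HV) as [c1 [hc1 e1]]; try lra.
    assert (p < q) by (destruct (Req_dec p q); [subst; lra| lra]).
    assert (d1 : dV c1 > 0) by (destruct (Rle_lt_dec (dV c1) 0); [nra| lra]).
    assert (hm := Hmin p ltac:(lra)).
    assert (q < x0) by (destruct (Req_dec q x0); [subst; lra| lra]).
    destruct (mvt_in L V dV q x0 HV) as [c2 [hc2 e2]]; try lra.
    assert (hm2 := Hmin q ltac:(lra)).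
    assert (d2 : dV c2 < 0) by (destruct (Rle_lt_dec 0 (dV c2)); [nra| lra]).
    assert (c2 <> x0) by (intro; subst; assert (dV x0 = 0) by (apply Hcrit; lra); lra).
    assert (c1 < c2) by (destruct (Req_dec c1 c2); [subst; lra| lra]).
    destruct (IVT _ c1 c2 Hg) as [z [hz ez]]; [lra| | |].
    + cbv beta. rewrite clamp_id by lra. lra.
    + cbv beta. rewrite clamp_id by lra. lra.
    + rewrite clamp_id in ez by lra. assert (z = x0) by (apply Hcrit; lra). lra.
  - intros p q h1 h2 h3. destruct (Rle_lt_dec (V p) (V q)) as [ok|bad]; [exact ok|exfalso].
    destruct (mvt_in L V dV p q HV) as [c1 [hc1 e1]]; try lra.
    assert (p < q) by (destruct (Req_dec p q); [subst; lra| lra]).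
    assert (d1 : dV c1 < 0) by (destruct (Rle_lt_dec 0 (dV c1)); [nra| lra]).
    assert (hm := Hmin q ltac:(lra)).
    assert (x0 < p) by (destruct (Req_dec p x0); [subst; lra| lra]).
    destruct (mvt_in L V dV x0 p HV) as [c2 [hc2 e2]]; try lra.
    assert (d2 : dV c2 > 0) by (destruct (Rle_lt_dec (dV c2) 0); [nra| lra]).
    assert (c2 <> x0) by (intro; subst; assert (dV x0 = 0) by (apply Hcrit; lra); lra).
    assert (c2 < c1) by (destruct (Req_dec c1 c2); [subst; lra| lra]).
    destruct (IVT _ c2 c1 Hg) as [z [hz ez]].
    + lra.
    + cbv beta. rewrite clamp_id by lra. lra.
    + cbv beta. rewrite clamp_id by lra. lra.
    + rewrite clamp_id in ez by lra. assert (z = x0) by (apply Hcrit; lra). lra.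
Qed.

Lemma V_between (L : R) V dV x0 : 0 < L -> C1_on L V dV -> 0 < x0 < L ->
  (forall x, 0 <= x <= L -> (dV x = 0 <-> x = x0)) -> (forall x, 0 <= x <= L -> V x0 <= V x) ->
  forall y z s c, 0 <= y <= L -> 0 <= z <= L -> V y <= c -> V z <= c ->
  Rmin y z <= s <= Rmax y z -> V s <= c.
Proof.
  intros hL HV hx0 Hc Hm y z s c hy hz hvy hvz hs.
  destruct (V_mono L V dV x0 hL HV hx0 Hc Hm) as [M1 M2].
  assert (exists w, 0 <= w <= L /\ V w <= c /\ w <= s) as [w1 [hw1 [hv1 hs1]]].
  { unfold Rmin in hs. destruct Rle_dec in hs; [exists y|exists z]; repeat split; lra. }
  assert (exists w, 0 <= w <= L /\ V w <= c /\ s <= w) as [w2 [hw2 [hv2 hs2]]].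
  { unfold Rmax in hs. destruct Rle_dec in hs; [exists z|exists y]; repeat split; lra. }
  destruct (Rle_lt_dec s x0).
  - specialize (M1 w1 s). lra.
  - specialize (M2 s w2). lra.
Qed.

Definition mf (Ve : R -> R) (E tau x : R) := sqrt ((Ve x - E)^2 + tau^2).
Definition Af (eps : R) (Ve : R -> R) (E tau : R) (pr dpr pi dpi : R -> R) (x : R) :=
  eps^2 * (dpr x ^2 + dpi x ^2) + mf Ve E tau x * (pr x ^2 + pi x ^2).
Definition dAf (eps : R) (Ve dVe : R -> R) (E tau : R) (pr dpr pi dpi : R -> R) (x : R) :=
  2 * ((Ve x - E) + mf Ve E tau x) * (pr x * dpr x + pi x * dpi x)
  + ((Ve x - E) * dVe x / mf Ve E tau x) * (pr x ^2 + pi x ^2).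

Lemma A_deriv eps Ve dVe E tau pr dpr d2pr pi dpi d2pi x :
  0 < tau ->
  is_derive pr x (dpr x) -> is_derive dpr x (d2pr x) ->
  is_derive pi x (dpi x) -> is_derive dpi x (d2pi x) -> is_derive Ve x (dVe x) ->
  - eps ^ 2 * d2pr x + Ve x * pr x = E * pr x ->
  - eps ^ 2 * d2pi x + Ve x * pi x = E * pi x ->
  is_derive (Af eps Ve E tau pr dpr pi dpi) x (dAf eps Ve dVe E tau pr dpr pi dpi x).
Proof.
  intros ht h1 h2 h3 h4 h5 e1 e2. unfold Af, dAf, mf.
  assert (hp : 0 < (Ve x - E) ^ 2 + tau ^ 2) by (apply Rplus_le_lt_0_compat; [apply pow2_ge_0| apply pow_lt; auto]).
  assert (hs : 0 < sqrt ((Ve x - E) ^ 2 + tau ^ 2)) by (apply sqrt_lt_R0; auto).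
  auto_derive.
  all: try (repeat split; try (eexists; eassumption); lra).
  replace (Derive (fun x0 : R => dpr x0) x) with (d2pr x) by (symmetry; apply is_derive_unique; exact h2).
  replace (Derive (fun x0 : R => dpi x0) x) with (d2pi x) by (symmetry; apply is_derive_unique; exact h4).
  replace (Derive (fun x0 : R => pr x0) x) with (dpr x) by (symmetry; apply is_derive_unique; exact h1).
  replace (Derive (fun x0 : R => pi x0) x) with (dpi x) by (symmetry; apply is_derive_unique; exact h3).
  replace (Derive (fun x0 : R => Ve x0) x) with (dVe x) by (symmetry; apply is_derive_unique; exact h5).
  replace ((Ve x + - E) * ((Ve x + - E) * 1) + tau * (tau * 1)) with ((Ve x - E) ^ 2 + tau ^ 2) by ring.
  set (S := sqrt ((Ve x - E) ^ 2 + tau ^ 2)) in *.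
  replace (eps * (eps * 1) * (1 * d2pr x * ((1 + 1) * (dpr x * 1)) + 1 * d2pi x * ((1 + 1) * (dpi x * 1))))
    with (2 * dpr x * (eps ^ 2 * d2pr x) + 2 * dpi x * (eps ^ 2 * d2pi x)) by ring.
  replace (eps ^ 2 * d2pr x) with ((Ve x - E) * pr x) by lra.
  replace (eps ^ 2 * d2pi x) with ((Ve x - E) * pi x) by lra.
  field. lra.
Qed.

Lemma fact2 W tau : 0 < tau ->
  let m := sqrt (W^2 + tau^2) in
  0 <= W + m /\ W + m <= sqrt m * (2 * sqrt (Rmax W 0) + sqrt tau).
Proof.
  intros ht m.
  assert (hq : 0 < W^2 + tau^2) by (apply Rplus_le_lt_0_compat; [apply pow2_ge_0| apply pow_lt; auto]).
  assert (hm0 : 0 < m) by (apply sqrt_lt_R0; auto).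
  assert (hm2 : m * m = W^2 + tau^2) by (apply sqrt_sqrt; lra).
  set (r := sqrt m). set (t := sqrt tau). set (s := sqrt (Rmax W 0)).
  assert (hr2 : r * r = m) by (apply sqrt_sqrt; lra).
  assert (ht2 : t * t = tau) by (apply sqrt_sqrt; lra).
  assert (hs0 : 0 <= Rmax W 0) by apply Rmax_r.
  assert (hs2 : s * s = Rmax W 0) by (apply sqrt_sqrt; lra).
  assert (hr : 0 <= r) by apply sqrt_pos. assert (htt : 0 <= t) by apply sqrt_pos.
  assert (hss : 0 <= s) by apply sqrt_pos.
  assert (hWm : Rabs W <= m).
  { assert (W <= m) by nra. assert (- W <= m) by nra. unfold Rabs; destruct Rcase_abs; lra. }
  split.
  - unfold Rabs in hWm; destruct Rcase_abs in hWm; lra.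
  - destruct (Rle_lt_dec 0 W) as [hW|hW].
    + rewrite Rmax_left in hs2 by lra.
      assert (s <= r) by (apply Rsqr_incr_0_var; unfold Rsqr; [rewrite Rabs_right in hWm by lra; nra| lra]).
      assert (m <= W + tau) by nra.
      assert (r <= s + t) by (apply Rsqr_incr_0_var; unfold Rsqr; nra).
      nra.
    + assert (e : (W + m) * m <= tau ^ 2) by nra.
      assert (t <= r) by (apply Rsqr_incr_0_var; unfold Rsqr; nra).
      assert (t * t <= r * r) by nra. assert (t * t * t <= r * r * r) by nra.
      assert (tau^2 <= r * t * m) by (rewrite <- ht2, <- hr2; nra).
      assert ((W + m) <= r * t) by (apply (Rmult_le_reg_r m); nra).
      nra.
Qed.

Lemma dA_bound eps Ve dVe E tau C pr dpr pi dpi x : 0 < eps -> 0 < tau -> Rabs (dVe x) <= C ->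
  Rabs (dAf eps Ve dVe E tau pr dpr pi dpi x) <=
  ((2 * sqrt (Rmax (Ve x - E) 0) + sqrt tau) / eps + C / tau) * Af eps Ve E tau pr dpr pi dpi x.
Proof.
  intros he ht hC. unfold dAf, Af, mf.
  destruct (fact2 (Ve x - E) tau ht) as [f1 f2].
  set (W := Ve x - E) in *. set (m := sqrt (W^2 + tau^2)) in *.
  set (r := sqrt m) in *. set (K := 2 * sqrt (Rmax W 0) + sqrt tau) in *.
  set (g := pr x * dpr x + pi x * dpi x). set (u := pr x ^ 2 + pi x ^ 2).
  set (P := dpr x ^ 2 + dpi x ^ 2).
  assert (hq : 0 < W^2 + tau^2) by (apply Rplus_le_lt_0_compat; [apply pow2_ge_0| apply pow_lt; auto]).
  assert (hm0 : 0 < m) by (apply sqrt_lt_R0; auto).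
  assert (hm2 : m * m = W^2 + tau^2) by (apply sqrt_sqrt; lra).
  assert (hr2 : r * r = m) by (apply sqrt_sqrt; lra).
  assert (hr : 0 <= r) by apply sqrt_pos.
  assert (hK : 0 <= K) by (unfold K; assert (0 <= sqrt (Rmax W 0)) by apply sqrt_pos; assert (0 <= sqrt tau) by apply sqrt_pos; lra).
  assert (hu : 0 <= u) by (unfold u; nra).
  assert (hP : 0 <= P) by (unfold P; nra).
  assert (hmt : tau <= m) by nra.
  assert (hWm : Rabs W <= m).
  { assert (W <= m) by nra. assert (- W <= m) by nra. unfold Rabs; destruct Rcase_abs; lra. }
  assert (f3 : 2 * Rabs g * eps * r <= eps ^ 2 * P + m * u).
  { rewrite <- hr2. unfold P, u, g.
    assert (0 <= (eps * dpr x - r * pr x)^2 + (eps * dpi x - r * pi x)^2) by (apply Rplus_le_le_0_compat; apply pow2_ge_0).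
    assert (0 <= (eps * dpr x + r * pr x)^2 + (eps * dpi x + r * pi x)^2) by (apply Rplus_le_le_0_compat; apply pow2_ge_0).
    unfold Rabs; destruct Rcase_abs; nra. }
  assert (t1 : Rabs (2 * (W + m) * g) <= K / eps * (eps ^ 2 * P + m * u)).
  { rewrite Rabs_mult, Rabs_mult. rewrite (Rabs_right 2) by lra. rewrite (Rabs_right (W + m)) by lra.
    assert (2 * (W + m) * Rabs g <= 2 * (r * K) * Rabs g) by (assert (0 <= Rabs g) by apply Rabs_pos; nra).
    assert (2 * (r * K) * Rabs g = K / eps * (2 * Rabs g * eps * r)) by (field; lra).
    assert (K / eps * (2 * Rabs g * eps * r) <= K / eps * (eps ^ 2 * P + m * u)).
    { apply Rmult_le_compat_l; auto. apply Rmult_le_pos; auto. left; apply Rinv_0_lt_compat; auto. }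
    lra. }
  assert (t2 : Rabs (W * dVe x / m * u) <= C / tau * (eps ^ 2 * P + m * u)).
  { assert (Rabs (W * dVe x / m * u) = Rabs W / m * Rabs (dVe x) * u).
    { unfold Rdiv. rewrite !Rabs_mult, Rabs_inv. rewrite (Rabs_right m) by lra. rewrite (Rabs_right u) by lra. ring. }
    assert (Rabs W / m <= 1) by (apply (Rmult_le_reg_r m); auto; unfold Rdiv; rewrite Rmult_assoc, Rinv_l; lra).
    assert (0 <= Rabs W / m) by (apply Rmult_le_pos; [apply Rabs_pos| left; apply Rinv_0_lt_compat; auto]).
    assert (0 <= Rabs (dVe x)) by apply Rabs_pos.
    assert (Rabs W / m * Rabs (dVe x) <= C) by nra.
    assert (Rabs W / m * Rabs (dVe x) * u <= C * u) by (apply Rmult_le_compat_r; auto).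
    assert (C * u <= C / tau * (m * u)).
    { assert (0 <= C) by (assert (0 <= Rabs (dVe x)) by apply Rabs_pos; lra).
      assert (E1 : C / tau * (m * u) = C * u * (m / tau)) by (field; lra).
      assert (1 <= m / tau) by (apply (Rmult_le_reg_r tau); auto; unfold Rdiv; rewrite Rmult_assoc, Rinv_l; lra).
      rewrite E1. assert (0 <= C * u) by (apply Rmult_le_pos; auto). nra. }
    assert (0 <= C / tau * (eps ^ 2 * P)) by (apply Rmult_le_pos; [apply Rmult_le_pos; [lra| left; apply Rinv_0_lt_compat; auto]| apply Rmult_le_pos; [apply pow2_ge_0| auto]]).
    lra. }
  eapply Rle_trans; [apply Rabs_triang|]. lra.
Qed.
Lemma cont_sqmax (f : R -> R) x : continuous f x -> continuous (fun y => sqrt (Rmax (f y) 0)) x.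
Proof.
  intro h. apply (continuous_ext (fun y => sqrt ((f y + Rabs (f y)) * / 2))).
  - intro y. f_equal. unfold Rmax, Rabs. destruct Rle_dec, Rcase_abs; lra.
  - apply continuous_sqrt_comp. apply (continuous_mult (fun y => f y + Rabs (f y)) (fun _ => / 2)).
    + apply (continuous_plus f (fun y => Rabs (f y))); auto. apply continuous_Rabs_comp; auto.
    + apply continuous_const.
Qed.

Ltac rw_der f d h :=
  match type of h with is_derive _ ?x _ =>
  replace (Derive (fun x0 : R => f x0) x) with (d x) by (symmetry; apply is_derive_unique; exact h) end.

Lemma ustar (L eps : R) (Ve : R -> R) (E : R) (pr dpr d2pr pi dpi d2pi : R -> R) :
  0 < L -> 0 < eps ->
  (forall x, 0 <= x <= L -> is_derive pr x (dpr x) /\ is_derive dpr x (d2pr x) /\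
       is_derive pi x (dpi x) /\ is_derive dpi x (d2pi x) /\
       - eps ^ 2 * d2pr x + Ve x * pr x = E * pr x /\
       - eps ^ 2 * d2pi x + Ve x * pi x = E * pi x) ->
  pr 0 = 0 -> pi 0 = 0 -> pr L = 0 -> pi L = 0 ->
  RInt (fun x => pr x ^ 2 + pi x ^ 2) 0 L = 1 ->
  exists ys, 0 <= ys <= L /\ 1 / L <= pr ys ^ 2 + pi ys ^ 2 /\ Ve ys - E <= 0.
Proof.
  intros hL he Hpsi h0 h1 h2 h3 hI.
  set (u := fun x => pr x ^ 2 + pi x ^ 2).
  set (g := fun x => pr x * dpr x + pi x * dpi x).
  assert (du : forall x, 0 <= x <= L -> is_derive u x (2 * g x)).
  { intros x hx. destruct (Hpsi x hx) as [a1 [a2 [a3 [a4 _]]]].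
    unfold u, g. auto_derive.
    - repeat split; eexists; eassumption.
    - rw_der pr dpr a1. rw_der pi dpi a3. ring. }
  assert (dg : forall x, 0 <= x <= L -> is_derive g x (dpr x ^ 2 + dpi x ^ 2 + pr x * d2pr x + pi x * d2pi x)).
  { intros x hx. destruct (Hpsi x hx) as [a1 [a2 [a3 [a4 _]]]].
    unfold g. auto_derive.
    - repeat split; eexists; eassumption.
    - rw_der pr dpr a1. rw_der pi dpi a3. rw_der dpr d2pr a2. rw_der dpi d2pi a4. ring. }
  assert (cu : forall x, 0 <= x <= L -> continuity_pt u x).
  { intros x hx. apply (deriv_cont u x (2 * g x)). apply du; auto. }
  destruct (continuity_ab_maj u 0 L ltac:(lra) cu) as [ys [Hmax hys]].
  assert (exu : ex_RInt u 0 L).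
  { apply (@ex_RInt_continuous R_CompleteNormedModule). intros z hz.
    rewrite Rmin_left, Rmax_right in hz by lra. apply continuity_pt_filterlim. apply cu; auto. }
  assert (hb : 1 <= L * u ys).
  { rewrite <- hI. fold u.
    assert (RInt u 0 L <= RInt (fun _ => u ys) 0 L).
    { apply RInt_le; auto; [lra| apply ex_RInt_const| intros; apply Hmax; lra]. }
    rewrite RInt_const in H. unfold scal in H; simpl in H. unfold mult in H; simpl in H. lra. }
  assert (hu1 : 1 / L <= u ys).
  { apply (Rmult_le_reg_l L); auto. unfold Rdiv. rewrite <- Rmult_assoc, Rmult_1_r, Rinv_r; lra. }
  exists ys. split; auto. split; [exact hu1|].
  assert (u0 : u 0 = 0) by (unfold u; rewrite h0, h1; ring).
  assert (uL : u L = 0) by (unfold u; rewrite h2, h3; ring).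
  assert (hpos : 0 < u ys) by (assert (0 < 1 / L) by (apply Rdiv_lt_0_compat; lra); lra).
  assert (ys <> 0) by (intro e; rewrite e in hpos; lra).
  assert (ys <> L) by (intro e; rewrite e in hpos; lra).
  assert (hys' : 0 < ys < L) by lra.
  destruct (Rle_lt_dec (Ve ys - E) 0) as [ok|bad]; [exact ok| exfalso].
  assert (g0 : g ys = 0).
  { assert (dl : derivable_pt_lim u ys (2 * g ys)) by (apply is_derive_Reals; apply du; lra).
    assert (Hz := deriv_maximum u 0 L ys (exist _ (2 * g ys) dl) ltac:(lra) ltac:(lra)
                   (fun x h1 h2 => Hmax x (conj (Rlt_le _ _ h1) (Rlt_le _ _ h2)))).
    simpl in Hz. lra. }
  set (l := dpr ys ^ 2 + dpi ys ^ 2 + pr ys * d2pr ys + pi ys * d2pi ys).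
  assert (hl : 0 < l).
  { destruct (Hpsi ys (conj (Rlt_le _ _ (proj1 hys')) (Rlt_le _ _ (proj2 hys')))) as [_ [_ [_ [_ [e1 e2]]]]].
    assert (q1 : eps ^ 2 * d2pr ys = (Ve ys - E) * pr ys) by lra.
    assert (q2 : eps ^ 2 * d2pi ys = (Ve ys - E) * pi ys) by lra.
    assert (eps ^ 2 * (pr ys * d2pr ys + pi ys * d2pi ys) = (Ve ys - E) * u ys).
    { replace (eps ^ 2 * (pr ys * d2pr ys + pi ys * d2pi ys)) with (pr ys * (eps ^ 2 * d2pr ys) + pi ys * (eps ^ 2 * d2pi ys)) by ring.
      rewrite q1, q2. unfold u. ring. }
    assert (0 < eps ^ 2) by (apply pow_lt; lra).
    assert (0 < (Ve ys - E) * u ys) by (apply Rmult_lt_0_compat; lra).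
    assert (0 < pr ys * d2pr ys + pi ys * d2pi ys) by nra.
    unfold l. nra. }
  assert (dgl : derivable_pt_lim g ys l) by (apply is_derive_Reals; apply dg; lra).
  destruct (dgl l hl) as [del hdel].
  set (h := Rmin del (L - ys) / 2).
  assert (hh : 0 < h) by (unfold h; apply Rmin_case; destruct del; simpl; lra).
  assert (hh2 : h < del) by (unfold h; assert (Rmin del (L - ys) <= del) by apply Rmin_l; destruct del; simpl in *; lra).
  assert (hh3 : ys + h < L) by (unfold h; assert (Rmin del (L - ys) <= L - ys) by apply Rmin_r; lra).
  destruct (MVT_cor2 u (fun x => 2 * g x) ys (ys + h)) as [c [ec hc]]; [lra| |].
  { intros c hc. apply is_derive_Reals. apply du. lra. }
  assert (gc : 0 < g c).
  { assert (hc' : c - ys <> 0) by lra.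
    assert (Rabs (c - ys) < del) by (rewrite Rabs_right; lra).
    specialize (hdel (c - ys) hc' H1). replace (ys + (c - ys)) with c in hdel by ring.
    rewrite g0, Rminus_0_r in hdel.
    assert (0 < g c / (c - ys)).
    { unfold Rabs in hdel; destruct Rcase_abs in hdel; lra. }
    assert (g c = g c / (c - ys) * (c - ys)) by (field; lra).
    nra. }
  assert (u (ys + h) <= u ys) by (apply Hmax; lra).
  nra.
Qed.

Lemma RInt_sub (f : R -> R) a c d b : a <= c -> c <= d -> d <= b ->
  (forall x, a <= x <= b -> 0 <= f x) -> (forall x, a <= x <= b -> continuous f x) ->
  RInt f c d <= RInt f a b.
Proof.
  intros h1 h2 h3 hp hc.
  assert (ex : forall x y, a <= x -> x <= y -> y <= b -> ex_RInt f x y).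
  { intros x y hx hxy hy. apply (@ex_RInt_continuous R_CompleteNormedModule). intros z hz.
    rewrite Rmin_left, Rmax_right in hz by lra. apply hc; lra. }
  assert (e1 : RInt f a c + RInt f c b = RInt f a b) by exact (RInt_Chasles f a c b (ex a c ltac:(lra) h1 ltac:(lra)) (ex c b ltac:(lra) ltac:(lra) ltac:(lra))).
  assert (e2 : RInt f c d + RInt f d b = RInt f c b) by exact (RInt_Chasles f c d b (ex c d ltac:(lra) h2 ltac:(lra)) (ex d b ltac:(lra) h3 ltac:(lra))).
  assert (0 <= RInt f a c) by (apply RInt_ge_0; [lra| apply ex; lra| intros; apply hp; lra]).
  assert (0 <= RInt f d b) by (apply RInt_ge_0; [lra| apply ex; lra| intros; apply hp; lra]).
  lra.
Qed.

Lemma interior_bound (L a b s1 ell eps : R) (Ve : R -> R) (E tau alo ahi mu : R) (pr dpr d2pr pi dpi d2pi : R -> R) :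
  0 <= alo -> 0 <= mu -> 0 <= a -> a <= s1 -> s1 + 3 * ell <= b -> b <= L -> 0 < ell -> 0 < eps -> 0 < tau ->
  (forall x, 0 <= x <= L -> is_derive pr x (dpr x) /\ is_derive dpr x (d2pr x) /\
       is_derive pi x (dpi x) /\ is_derive dpi x (d2pi x) /\
       - eps ^ 2 * d2pr x + Ve x * pr x = E * pr x /\
       - eps ^ 2 * d2pi x + Ve x * pi x = E * pi x) ->
  (forall x, 0 <= x <= L -> continuity_pt Ve x) ->
  (forall t, s1 <= t <= s1 + 3 * ell -> alo <= Af eps Ve E tau pr dpr pi dpi t <= ahi) ->
  (forall t, s1 <= t <= s1 + 3 * ell -> mf Ve E tau t - (Ve t - E) <= mu) ->
  ell * alo <= mu * RInt (fun x => pr x ^ 2 + pi x ^ 2) a b +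
     2 * eps * sqrt (RInt (fun x => pr x ^ 2 + pi x ^ 2) a b / ell * ahi).
Proof.
  intros halo hmu ha h1 h2 hb hl he ht Hpsi cVe HA Hmu.
  set (u := fun x => pr x ^ 2 + pi x ^ 2).
  set (g := fun x => pr x * dpr x + pi x * dpi x).
  set (S := RInt u a b).
  assert (du : forall x, 0 <= x <= L -> is_derive u x (2 * g x)).
  { intros x hx. destruct (Hpsi x hx) as [a1 [a2 [a3 [a4 _]]]].
    unfold u, g. auto_derive.
    - repeat split; eexists; eassumption.
    - rw_der pr dpr a1. rw_der pi dpi a3. ring. }
  set (g2 := fun x => dpr x ^ 2 + dpi x ^ 2 + (Ve x - E) * u x / eps ^ 2).
  assert (dg : forall x, 0 <= x <= L -> is_derive g x (g2 x)).
  { intros x hx. destruct (Hpsi x hx) as [a1 [a2 [a3 [a4 [e1 e2]]]]].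
    unfold g. auto_derive.
    - repeat split; eexists; eassumption.
    - rw_der pr dpr a1. rw_der pi dpi a3. rw_der dpr d2pr a2. rw_der dpi d2pi a4.
      unfold g2, u. assert (0 < eps ^ 2) by (apply pow_lt; lra).
      assert (q1 : d2pr x = (Ve x - E) * pr x / eps ^ 2).
      { apply (Rmult_eq_reg_l (eps ^ 2)); [| lra]. field_simplify; [| lra]. lra. }
      assert (q2 : d2pi x = (Ve x - E) * pi x / eps ^ 2).
      { apply (Rmult_eq_reg_l (eps ^ 2)); [| lra]. field_simplify; [| lra]. lra. }
      rewrite q1, q2.
      field. lra. }
  assert (cu : forall x, 0 <= x <= L -> continuous u x).
  { intros x hx. apply continuity_pt_filterlim. apply (deriv_cont u x (2 * g x)). apply du; auto. }
  assert (up : forall x, 0 <= u x) by (intro x; unfold u; nra).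
  assert (cg2 : forall x, 0 <= x <= L -> continuous g2 x).
  { intros x hx. destruct (Hpsi x hx) as [a1 [a2 [a3 [a4 _]]]].
    apply continuity_pt_filterlim. unfold g2.
    apply continuity_pt_plus. apply continuity_pt_plus.
    - apply continuity_pt_mult. apply (deriv_cont dpr x (d2pr x) a2). apply continuity_pt_mult. apply (deriv_cont dpr x (d2pr x) a2). apply continuity_pt_const; intros ? ?; reflexivity.
    - apply continuity_pt_mult. apply (deriv_cont dpi x (d2pi x) a4). apply continuity_pt_mult. apply (deriv_cont dpi x (d2pi x) a4). apply continuity_pt_const; intros ? ?; reflexivity.
    - apply continuity_pt_mult. apply continuity_pt_mult. apply continuity_pt_minus. apply cVe; auto.
      apply continuity_pt_const; intros ? ?; reflexivity.
      apply continuity_pt_filterlim. apply cu; auto.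
      apply continuity_pt_const; intros ? ?; reflexivity. }
  assert (pmin : forall c, a <= c -> c + ell <= b -> exists p, c <= p <= c + ell /\ ell * u p <= S).
  { intros c hc1 hc2.
    destruct (continuity_ab_min u c (c + ell) ltac:(lra)) as [p [hp1 hp2]].
    { intros z hz. apply continuity_pt_filterlim. apply cu. lra. }
    exists p. split; auto.
    assert (RInt (fun _ => u p) c (c + ell) <= RInt u c (c + ell)).
    { apply RInt_le; [lra| apply ex_RInt_const| |].
      - apply (@ex_RInt_continuous R_CompleteNormedModule). intros z hz.
        rewrite Rmin_left, Rmax_right in hz by lra. apply cu; lra.
      - intros; apply hp1; lra. }
    rewrite RInt_const in H. unfold scal in H; simpl in H; unfold mult in H; simpl in H.
    assert (RInt u c (c + ell) <= S).
    { apply RInt_sub; try lra. intros; auto. intros; apply cu; lra. }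
    replace (c + ell - c) with ell in H by ring. lra. }
  destruct (pmin s1) as [p [hp hup]]; try lra.
  destruct (pmin (s1 + 2 * ell)) as [q [hq huq]]; try lra.
  assert (ftc : RInt g2 p q = g q - g p).
  { apply is_RInt_unique.
    apply (is_RInt_derive g g2 p q).
    - intros x hx. rewrite Rmin_left, Rmax_right in hx by lra. apply dg; lra.
    - intros x hx. rewrite Rmin_left, Rmax_right in hx by lra. apply cg2; lra. }
  assert (exg2 : ex_RInt g2 p q).
  { apply (@ex_RInt_continuous R_CompleteNormedModule). intros z hz.
    rewrite Rmin_left, Rmax_right in hz by lra. apply cg2; lra. }
  assert (exu : ex_RInt u p q).
  { apply (@ex_RInt_continuous R_CompleteNormedModule). intros z hz.
    rewrite Rmin_left, Rmax_right in hz by lra. apply cu; lra. }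
  assert (I1 : RInt (fun x => eps ^ 2 * g2 x) p q = eps ^ 2 * (g q - g p)).
  { rewrite <- ftc. exact (RInt_scal g2 p q (eps ^ 2) exg2). }
  assert (I2 : RInt (fun x => alo - mu * u x) p q = alo * (q - p) - mu * RInt u p q).
  { assert (e := RInt_minus (fun _ => alo) (fun x => mu * u x) p q (ex_RInt_const _ _ _)
       (ex_RInt_scal u p q mu exu)).
    rewrite RInt_const in e.
    unfold minus, plus, opp, scal in e; simpl in e. unfold mult in e; simpl in e.
    assert (e2 : RInt (fun x => mu * u x) p q = mu * RInt u p q) by exact (RInt_scal u p q mu exu).
    rewrite e2 in e. unfold Rminus. rewrite e. apply (f_equal (fun z => z + - (mu * RInt u p q))). apply Rmult_comm. }
  assert (I3 : RInt (fun x => alo - mu * u x) p q <= RInt (fun x => eps ^ 2 * g2 x) p q).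
  { apply RInt_le; [lra| | |].
    - apply (ex_RInt_minus (fun _ => alo) (fun x => mu * u x)). apply ex_RInt_const. apply (ex_RInt_scal u p q mu exu).
    - apply (ex_RInt_scal g2 p q (eps ^ 2) exg2).
    - intros x hx. destruct (HA x ltac:(lra)) as [A1 A2]. assert (M := Hmu x ltac:(lra)).
      unfold Af in A1. unfold g2. assert (0 < eps ^ 2) by (apply pow_lt; lra).
      assert (e : eps ^ 2 * (dpr x ^ 2 + dpi x ^ 2 + (Ve x - E) * u x / eps ^ 2) =
                  eps ^ 2 * (dpr x ^ 2 + dpi x ^ 2) + mf Ve E tau x * u x - (mf Ve E tau x - (Ve x - E)) * u x) by (field; lra).
      rewrite e. assert (0 <= u x) by apply up.
      assert ((mf Ve E tau x - (Ve x - E)) * u x <= mu * u x) by (apply Rmult_le_compat_r; auto).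
      unfold u in *. lra. }
  assert (hS1 : RInt u p q <= S) by (apply RInt_sub; try lra; [intros; auto| intros; apply cu; lra]).
  assert (gb : forall t, t = p \/ t = q -> eps ^ 2 * Rabs (g t) <= eps * sqrt (S / ell * ahi)).
  { intros t htt.
    assert (hr : s1 <= t <= s1 + 3 * ell) by (destruct htt; subst; lra).
    assert (hu : ell * u t <= S) by (destruct htt; subst; auto).
    destruct (HA t hr) as [_ hA]. unfold Af in hA. change (pr t ^ 2 + pi t ^ 2) with (u t) in hA.
    assert (hm : 0 <= mf Ve E tau t) by apply sqrt_pos.
    assert (hut : 0 <= u t) by apply up.
    set (P := dpr t ^ 2 + dpi t ^ 2) in *.
    assert (cs : g t ^ 2 <= u t * P).
    { unfold g, u, P. assert (0 <= (pr t * dpi t - pi t * dpr t) ^ 2) by apply pow2_ge_0. nra. }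
    assert (hP : 0 <= P) by (unfold P; nra).
    assert (e2 : 0 < eps ^ 2) by (apply pow_lt; lra).
    assert (hePA : eps ^ 2 * P <= ahi) by (assert (0 <= mf Ve E tau t * u t) by (apply Rmult_le_pos; auto); lra).
    assert (hSl : u t <= S / ell) by (apply (Rmult_le_reg_l ell); auto; unfold Rdiv; rewrite <- Rmult_assoc, (Rmult_comm ell S), Rmult_assoc, Rinv_r; lra).
    assert (hX : 0 <= S / ell * ahi).
    { assert (0 <= eps ^ 2 * P) by (apply Rmult_le_pos; lra). apply Rmult_le_pos; lra. }
    apply Rsqr_incr_0_var.
    - unfold Rsqr. assert (sq : sqrt (S / ell * ahi) * sqrt (S / ell * ahi) = S / ell * ahi) by (apply sqrt_sqrt; auto).
      replace (eps * sqrt (S / ell * ahi) * (eps * sqrt (S / ell * ahi))) with (eps * eps * (sqrt (S / ell * ahi) * sqrt (S / ell * ahi))) by ring.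
      rewrite sq.
      assert (Rabs (g t) * Rabs (g t) = g t ^ 2) by (rewrite <- Rabs_mult; simpl; rewrite Rmult_1_r; apply Rabs_right; nra).
      assert (u t * (eps ^ 2 * P) <= S / ell * ahi) by (apply Rmult_le_compat; try lra; apply Rmult_le_pos; lra).
      assert (eps ^ 2 * (g t ^ 2) <= eps ^ 2 * (u t * P)) by (apply Rmult_le_compat_l; lra).
      assert (eps ^ 2 * Rabs (g t) * (eps ^ 2 * Rabs (g t)) = eps ^ 2 * (eps ^ 2 * g t ^ 2)) by (rewrite <- H; ring).
      rewrite H2. replace (eps * eps * (S / ell * ahi)) with (eps ^ 2 * (S / ell * ahi)) by ring.
      apply Rmult_le_compat_l; lra.
    - apply Rmult_le_pos; [lra| apply sqrt_pos]. }
  assert (gp := gb p (or_introl eq_refl)). assert (gq := gb q (or_intror eq_refl)).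
  assert (eps ^ 2 * (g q - g p) <= eps ^ 2 * Rabs (g q) + eps ^ 2 * Rabs (g p)).
  { assert (0 < eps ^ 2) by (apply pow_lt; lra).
    unfold Rabs; destruct Rcase_abs; destruct Rcase_abs; nra. }
  assert (ell * alo <= alo * (q - p)) by nra.
  assert (mu * RInt u p q <= mu * S) by (apply Rmult_le_compat_l; auto).
  lra.
Qed.
Lemma A_compare (L eps : R) (Ve dVe : R -> R) (E tau C : R) (pr dpr d2pr pi dpi d2pi : R -> R) :
  0 <= L -> 0 < eps -> 0 < tau ->
  (forall x, 0 <= x <= L -> is_derive pr x (dpr x) /\ is_derive dpr x (d2pr x) /\
       is_derive pi x (dpi x) /\ is_derive dpi x (d2pi x) /\
       - eps ^ 2 * d2pr x + Ve x * pr x = E * pr x /\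
       - eps ^ 2 * d2pi x + Ve x * pi x = E * pi x) ->
  (forall x, 0 <= x <= L -> is_derive Ve x (dVe x) /\ Rabs (dVe x) <= C) ->
  forall x y, 0 <= x <= L -> 0 <= y <= L ->
  Af eps Ve E tau pr dpr pi dpi y *
    exp (-((2/eps) * Rabs (RInt (fun s => sqrt (Rmax (Ve (clamp L s) - E) 0)) y x)
           + (sqrt tau / eps + C / tau) * Rabs (x - y)))
  <= Af eps Ve E tau pr dpr pi dpi x.
Proof.
  intros hL he ht Hpsi HVe.
  set (Ft := fun s => sqrt (Rmax (Ve (clamp L s) - E) 0)).
  assert (cFt : forall z, continuous Ft z).
  { intro z. unfold Ft. apply cont_sqmax. apply continuity_pt_filterlim.
    apply (clamp_cont L (fun t => Ve t - E)); auto. intros t ht'.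
    apply continuity_pt_minus. apply (deriv_cont Ve t (dVe t)). apply HVe; auto.
    apply continuity_pt_const. intros u v; reflexivity. }
  assert (exI : forall a b, ex_RInt Ft a b) by (intros a b; apply (@ex_RInt_continuous R_CompleteNormedModule); intros; apply cFt).
  set (k0 := sqrt tau / eps + C / tau).
  set (Phi := fun s => 2 / eps * RInt Ft 0 s + k0 * s).
  set (phi := fun s => 2 / eps * Ft s + k0).
  assert (dPhi : forall s, is_derive Phi s (phi s)).
  { intro s. assert (d1 : is_derive (fun s => RInt Ft 0 s) s (Ft s)).
    { apply (is_derive_RInt Ft (fun s => RInt Ft 0 s) 0). apply filter_forall. intro b. apply (@RInt_correct R_CompleteNormedModule). apply exI. apply cFt. }
    apply is_derive_Reals in d1. apply is_derive_Reals. unfold Phi, phi.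
    replace (2 / eps * Ft s + k0) with (2 / eps * Ft s + k0 * 1) by ring.
    apply (derivable_pt_lim_plus (fun s => 2 / eps * RInt Ft 0 s) (fun s => k0 * s)).
    - apply (derivable_pt_lim_scal (fun s => RInt Ft 0 s)). exact d1.
    - apply (derivable_pt_lim_scal (fun s => s)). apply derivable_pt_lim_id. }
  assert (Chas : forall p q, RInt Ft 0 p + RInt Ft p q = RInt Ft 0 q).
  { intros p q. exact (RInt_Chasles Ft 0 p q (exI 0 p) (exI p q)). }
  assert (G : forall p q, 0 <= p -> p <= q -> q <= L ->
     Af eps Ve E tau pr dpr pi dpi p * exp (-(Phi q - Phi p)) <= Af eps Ve E tau pr dpr pi dpi q /\
     Af eps Ve E tau pr dpr pi dpi q * exp (-(Phi q - Phi p)) <= Af eps Ve E tau pr dpr pi dpi p).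
  { intros p q h1 h2 h3. apply (gron _ (dAf eps Ve dVe E tau pr dpr pi dpi) Phi phi p q h2).
    intros s hs. assert (hs' : 0 <= s <= L) by lra.
    destruct (Hpsi s hs') as [a1 [a2 [a3 [a4 [a5 a6]]]]]. destruct (HVe s hs') as [v1 v2].
    split; [|split].
    - apply A_deriv with d2pr d2pi; auto.
    - apply dPhi.
    - eapply Rle_trans; [apply (dA_bound eps Ve dVe E tau C); auto|].
      right. f_equal. unfold phi, Ft, k0. rewrite clamp_id by auto. field. lra. }
  assert (DP : forall p q, Phi q - Phi p = 2 / eps * RInt Ft p q + k0 * (q - p)).
  { intros p q. unfold Phi. rewrite <- (Chas p q). ring. }
  assert (hk0 : 0 <= 2 / eps) by (apply Rmult_le_pos; [lra| left; apply Rinv_0_lt_compat; auto]).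
  intros x y hx hy. destruct (Rle_lt_dec y x) as [hyx|hxy].
  - destruct (G y x) as [g1 _]; try lra.
    rewrite DP in g1.
    assert (0 <= RInt Ft y x) by (apply RInt_ge_0; [lra| apply exI| intros; unfold Ft; apply sqrt_pos]).
    rewrite (Rabs_right (RInt Ft y x)) by lra. rewrite (Rabs_right (x - y)) by lra. exact g1.
  - destruct (G x y) as [_ g2]; try lra.
    rewrite DP in g2.
    assert (0 <= RInt Ft x y) by (apply RInt_ge_0; [lra| apply exI| intros; unfold Ft; apply sqrt_pos]).
    assert (e : RInt Ft y x = - RInt Ft x y).
    { rewrite <- (opp_RInt_swap Ft x y (exI x y)). reflexivity. }
    rewrite e, Rabs_Ropp, (Rabs_right (RInt Ft x y)) by lra.
    rewrite (Rabs_left (x - y)) by lra. replace (- (x - y)) with (y - x) by ring. exact g2.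
Qed.

Lemma quad ell alo mu eps ahi S : 0 < ell -> 0 < alo -> 0 < mu -> 0 < eps -> 0 < ahi -> 0 <= S ->
  ell * alo <= mu * S + 2 * eps * sqrt (S / ell * ahi) ->
  Rmin (ell * alo / (2 * mu)) (ell ^ 3 * alo ^ 2 / (16 * eps ^ 2 * ahi)) <= S.
Proof.
  intros h1 h2 h3 h4 h5 h6 H.
  destruct (Rle_lt_dec (ell * alo / 2) (mu * S)) as [c|c].
  - eapply Rle_trans; [apply Rmin_l|]. apply (Rmult_le_reg_l mu); auto.
    replace (mu * (ell * alo / (2 * mu))) with (ell * alo / 2) by (field; lra). lra.
  - eapply Rle_trans; [apply Rmin_r|].
    assert (q : ell * alo / (4 * eps) <= sqrt (S / ell * ahi)).
    { apply (Rmult_le_reg_l (2 * eps)); [lra|]. replace (2 * eps * (ell * alo / (4 * eps))) with (ell * alo / 2) by (field; lra). lra. }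
    assert (X0 : 0 <= S / ell * ahi) by (apply Rmult_le_pos; [apply Rmult_le_pos; [lra| left; apply Rinv_0_lt_compat; lra]| lra]).
    assert (q2 : (ell * alo / (4 * eps)) ^ 2 <= S / ell * ahi).
    { rewrite <- (sqrt_sqrt (S / ell * ahi)) by auto. assert (0 <= ell * alo / (4 * eps)).
      { apply Rmult_le_pos; [nra| left; apply Rinv_0_lt_compat; lra]. }
      simpl. rewrite Rmult_1_r. apply Rmult_le_compat; auto. }
    assert (e : ell ^ 3 * alo ^ 2 / (16 * eps ^ 2 * ahi) = (ell * alo / (4 * eps)) ^ 2 * ell / ahi) by (field; lra).
    rewrite e. apply (Rmult_le_reg_r (ahi / ell)). apply Rdiv_lt_0_compat; lra.
    replace ((ell * alo / (4 * eps)) ^ 2 * ell / ahi * (ahi / ell)) with ((ell * alo / (4 * eps)) ^ 2) by (field; lra).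
    replace (S * (ahi / ell)) with (S / ell * ahi) by (field; lra). exact q2.
Qed.

Lemma final_exp c eps d delta X : 0 < c -> 0 < eps -> 0 < delta -> eps * (Rabs (ln c) + 1) <= delta ->
  c * exp (-(2 / eps) * (d + delta / 2)) <= X -> exp (-(2 / eps) * (d + delta)) <= X.
Proof.
  intros hc he hd hed H.
  assert (e : exp (-(2 / eps) * (d + delta)) = exp (-(2 / eps) * (d + delta / 2)) * exp (- (delta / eps))).
  { rewrite <- exp_plus. f_equal. field. lra. }
  assert (exp (- (delta / eps)) <= c).
  { rewrite <- (exp_ln c) by auto.
    destruct (Rle_lt_dec (- (delta / eps)) (ln c)) as [ok|bad].
    - destruct ok as [ok|ok]; [left; apply exp_increasing; auto| right; rewrite ok; auto].
    - exfalso. assert (delta / eps >= Rabs (ln c) + 1).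
      { apply Rle_ge. apply (Rmult_le_reg_l eps); auto. replace (eps * (delta / eps)) with delta by (field; lra). lra. }
      assert (- ln c <= Rabs (ln c)) by (rewrite <- Rabs_Ropp; apply Rle_abs). lra. }
  rewrite e. eapply Rle_trans; [| exact H]. rewrite Rmult_comm. apply Rmult_le_compat_r; auto. left; apply exp_pos.
Qed.

Lemma glb_approx (P : R -> Prop) r0 : P r0 -> (forall r, P r -> 0 <= r) ->
  0 <= real (Glb_Rbar P) /\ forall gam, 0 < gam -> exists r, P r /\ r <= real (Glb_Rbar P) + gam.
Proof.
  intros h0 hp. destruct (Glb_Rbar_correct P) as [lb glb].
  assert (l0 : Rbar_le (Finite 0) (Glb_Rbar P)) by (apply glb; intros r hr; simpl; apply hp; auto).
  assert (l1 : Rbar_le (Glb_Rbar P) (Finite r0)) by (apply lb; auto).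
  destruct (Glb_Rbar P) as [d| |] eqn:Ed; simpl in l0, l1; try contradiction.
  simpl. split; auto. intros gam hg.
  destruct (classic (exists r, P r /\ r <= d + gam)) as [ok|ko]; auto. exfalso.
  assert (Rbar_le (Finite (d + gam)) (Finite d)).
  { apply glb. intros r hr. simpl. destruct (Rle_lt_dec r (d + gam)) as [c|c]; [exfalso; apply ko; exists r; auto| lra]. }
  simpl in H. lra.
Qed.

Lemma int_cmp (F G : R -> R) y x c : 0 <= c ->
  (forall s, Rmin y x <= s <= Rmax y x -> continuous F s) ->
  (forall s, Rmin y x <= s <= Rmax y x -> continuous G s) ->
  (forall s, Rmin y x <= s <= Rmax y x -> 0 <= F s /\ 0 <= G s /\ F s <= G s + c) ->
  Rabs (RInt F y x) <= Rabs (RInt G y x) + c * Rabs (x - y).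
Proof.
  intros hc cF cG H.
  assert (key : forall p q, p <= q -> Rmin y x = p -> Rmax y x = q ->
    Rabs (RInt F p q) <= Rabs (RInt G p q) + c * (q - p)).
  { intros p q hpq e1 e2. rewrite e1, e2 in *.
    assert (eF : ex_RInt F p q) by (apply (@ex_RInt_continuous R_CompleteNormedModule); intros; rewrite Rmin_left, Rmax_right in * by lra; apply cF; auto).
    assert (eG : ex_RInt G p q) by (apply (@ex_RInt_continuous R_CompleteNormedModule); intros; rewrite Rmin_left, Rmax_right in * by lra; apply cG; auto).
    assert (0 <= RInt F p q) by (apply RInt_ge_0; [lra| exact eF| intros z hz; destruct (H z ltac:(lra)) as [? [? ?]]; lra]).
    assert (0 <= RInt G p q) by (apply RInt_ge_0; [lra| exact eG| intros z hz; destruct (H z ltac:(lra)) as [? [? ?]]; lra]).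
    assert (RInt F p q <= RInt (fun s => G s + c) p q) by (apply RInt_le; [lra| exact eF| apply (ex_RInt_plus G (fun _ => c)); [exact eG| apply ex_RInt_const]| intros z hz; destruct (H z ltac:(lra)) as [? [? ?]]; lra]).
    assert (e : RInt (fun s => G s + c) p q = RInt G p q + c * (q - p)).
    { rewrite (RInt_plus G (fun _ => c)) by (auto; apply ex_RInt_const). rewrite RInt_const.
      unfold plus, scal; simpl; unfold mult; simpl. ring. }
    rewrite !Rabs_right by lra. lra. }
  destruct (Rle_lt_dec y x) as [h|h].
  - rewrite (Rabs_right (x - y)) by lra. apply key; auto; [apply Rmin_left| apply Rmax_right]; lra.
  - assert (k := key x y ltac:(lra) (Rmin_right y x ltac:(lra)) (Rmax_left y x ltac:(lra))).
    assert (eF : ex_RInt F x y) by (apply (@ex_RInt_continuous R_CompleteNormedModule); intros z hz; apply cF; rewrite Rmin_comm, Rmax_comm; exact hz).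
    assert (eG : ex_RInt G x y) by (apply (@ex_RInt_continuous R_CompleteNormedModule); intros z hz; apply cG; rewrite Rmin_comm, Rmax_comm; exact hz).
    assert (e1 : RInt F y x = - RInt F x y) by (rewrite <- (opp_RInt_swap F x y eF); reflexivity).
    assert (e2 : RInt G y x = - RInt G x y) by (rewrite <- (opp_RInt_swap G x y eG); reflexivity).
    rewrite e1, e2, !Rabs_Ropp, (Rabs_left (x - y)) by lra. lra.
Qed.

Lemma sqrt_add_le a b : 0 <= a -> 0 <= b -> sqrt (a + b) <= sqrt a + sqrt b.
Proof.
  intros ha hb. apply Rsqr_incr_0_var.
  - unfold Rsqr. rewrite sqrt_sqrt by lra.
    assert (sqrt a * sqrt a = a) by (apply sqrt_sqrt; lra). assert (sqrt b * sqrt b = b) by (apply sqrt_sqrt; lra).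
    assert (0 <= sqrt a * sqrt b) by (apply Rmult_le_pos; apply sqrt_pos). nra.
  - assert (0 <= sqrt a) by apply sqrt_pos. assert (0 <= sqrt b) by apply sqrt_pos. lra.
Qed.


Lemma sq_final (X Y : R) : 0 <= X -> exp (2 * Y) <= X -> exp Y <= sqrt X.
Proof.
  intros hX H. apply Rsqr_incr_0_var; [| apply sqrt_pos].
  unfold Rsqr. rewrite sqrt_sqrt by auto. rewrite <- exp_plus. replace (Y + Y) with (2 * Y) by ring. exact H.
Qed.

Lemma abs_tri a b : Rabs b <= Rabs a + Rabs (a - b).
Proof. unfold Rabs; repeat destruct Rcase_abs; lra. Qed.

Lemma abs_le_iff a c : Rabs a <= c -> - c <= a <= c.
Proof. unfold Rabs; destruct Rcase_abs; lra. Qed.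

Lemma mf_facts (Ve : R -> R) E tau x : 0 < tau ->
  tau <= mf Ve E tau x /\ Rabs (Ve x - E) <= mf Ve E tau x /\ mf Ve E tau x <= Rabs (Ve x - E) + tau.
Proof.
  intro ht. unfold mf. set (W := Ve x - E).
  assert (hq : 0 <= W ^ 2 + tau ^ 2) by (assert (0 <= W ^ 2) by apply pow2_ge_0; assert (0 <= tau ^ 2) by apply pow2_ge_0; lra).
  split; [| split].
  - rewrite <- (sqrt_pow2 tau) at 1 by lra. apply sqrt_le_1_alt. assert (0 <= W ^ 2) by apply pow2_ge_0; lra.
  - rewrite <- (sqrt_Rsqr_abs W). apply sqrt_le_1_alt. unfold Rsqr.
    assert (0 <= tau ^ 2) by apply pow2_ge_0. simpl. lra.
  - rewrite <- (sqrt_pow2 (Rabs W + tau)) by (assert (0 <= Rabs W) by apply Rabs_pos; lra).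
    apply sqrt_le_1_alt. assert (e : Rabs W * Rabs W = W * W) by (rewrite <- Rabs_mult; apply Rabs_right; nra).
    assert (0 <= Rabs W) by apply Rabs_pos. simpl. nra.
Qed.

Lemma mm_in L y x s : 0 <= y <= L -> 0 <= x <= L -> Rmin y x <= s <= Rmax y x -> 0 <= s <= L.
Proof. unfold Rmin, Rmax. destruct Rle_dec; lra. Qed.

Lemma RInt_zero a b : RInt (fun _ => 0) a b = 0.
Proof. rewrite RInt_const. unfold scal; simpl; unfold mult; simpl. ring. Qed.

Lemma exp_mono x y : x <= y -> exp x <= exp y.
Proof. intros [h|h]; [left; apply exp_increasing; auto| right; rewrite h; auto]. Qed.

Theorem theorem1p2
  (L : R) (V dV : R -> R) (Veps dVeps : R -> R -> R) (x0 : R)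
  (HL : 0 < L)
  (HV : C1_on L V dV)
  (HVeps : forall eps, 0 < eps <= 1 -> C1_on L (Veps eps) (dVeps eps))
  (Hconv : forall eta, 0 < eta -> exists e1, 0 < e1 /\
     forall eps, 0 < eps <= 1 -> eps < e1 ->
       forall x, 0 <= x <= L ->
         Rabs (V x - Veps eps x) <= eta /\ Rabs (dV x - dVeps eps x) <= eta)
  (Hx0 : 0 < x0 < L)
  (Hcrit : forall x, 0 <= x <= L -> (dV x = 0 <-> x = x0))
  (Hmin : forall x, 0 <= x <= L -> V x0 <= V x) :
  forall (U : R -> Prop) (a b : R),
    0 <= a -> a < b -> b <= L ->
    (forall x, a < x < b -> U x) -> (forall x, U x -> a <= x <= b) ->
  forall delta, 0 < delta ->
  exists eps0, 0 < eps0 /\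
  forall eps, 0 < eps -> eps < eps0 -> eps <= 1 ->
  forall (E : R) (pr dpr d2pr pi dpi d2pi : R -> R),
    (forall x, 0 <= x <= L ->
       is_derive pr x (dpr x) /\ is_derive dpr x (d2pr x) /\
       is_derive pi x (dpi x) /\ is_derive dpi x (d2pi x) /\
       - eps ^ 2 * d2pr x + Veps eps x * pr x = E * pr x /\
       - eps ^ 2 * d2pi x + Veps eps x * pi x = E * pi x) ->
    pr 0 = 0 -> pi 0 = 0 -> pr L = 0 -> pi L = 0 ->
    RInt (fun x => pr x ^ 2 + pi x ^ 2) 0 L = 1 ->
    sqrt (RInt (fun x => pr x ^ 2 + pi x ^ 2) a b)
      >= exp (- (agmon_dist_set L V x0 E U + delta) / eps) /\
    eps / sqrt (Rabs E + 1) * sqrt (dpr 0 ^ 2 + dpi 0 ^ 2)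
      >= exp (- (agmon_dist L V x0 E 0 + delta) / eps) /\
    eps / sqrt (Rabs E + 1) * sqrt (dpr L ^ 2 + dpi L ^ 2)
      >= exp (- (agmon_dist L V x0 E L + delta) / eps).
Proof.
  intros U a b ha hab hbL HU1 HU2 delta hdelta.
  assert (HVsave := HV).
  destruct HV as [HVd HVc].
  assert (cV : forall x, 0 <= x <= L -> continuity_pt V x).
  { intros x hx. apply (deriv_cont V x (dV x)). apply HVd; auto. }
  assert (exM : exists M, forall x, 0 <= x <= L -> Rabs (dV x) <= M).
  { assert (cg : forall c, continuity_pt (fun x => Rabs (dV (clamp L x))) c).
    { intro c. apply (continuity_pt_comp (fun x => dV (clamp L x)) Rabs).
      apply (clamp_cont_ed L dV); [lra| exact HVc]. apply Rcontinuity_abs. }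
    destruct (continuity_ab_maj _ 0 L ltac:(lra) (fun c _ => cg c)) as [xm [hm _]].
    exists (Rabs (dV (clamp L xm))). intros x hx. specialize (hm x hx). simpl in hm.
    rewrite clamp_id in hm by auto. exact hm. }
  assert (exB : exists B, forall x, 0 <= x <= L -> Rabs (V x) <= B).
  { destruct (continuity_ab_maj (fun x => Rabs (V x)) 0 L ltac:(lra)) as [xm [hm _]].
    { intros c hc. apply (continuity_pt_comp V Rabs). apply cV; auto. apply Rcontinuity_abs. }
    exists (Rabs (V xm)). exact hm. }
  destruct exM as [M HM]. destruct exB as [B HB].
  assert (hB : 0 <= B) by (assert (h := HB 0 ltac:(lra)); assert (0 <= Rabs (V 0)) by apply Rabs_pos; lra).
  assert (hM : 0 <= M) by (assert (h := HM 0 ltac:(lra)); assert (0 <= Rabs (dV 0)) by apply Rabs_pos; lra).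
  set (C := M + 1).
  set (gam := delta / 16).
  set (eta := Rmin 1 ((delta / (32 * L)) ^ 2)).
  set (tau := Rmin 1 ((delta / (8 * L)) ^ 2)).
  set (K1 := 2 * sqrt (2 * B + 2) + 1).
  set (ell := Rmin ((b - a) / 3) (delta / (72 * K1))).
  assert (hK1 : 1 <= K1) by (unfold K1; assert (0 <= sqrt (2 * B + 2)) by apply sqrt_pos; lra).
  assert (heta : 0 < eta) by (unfold eta; apply Rmin_case; [lra| apply pow_lt; apply Rdiv_lt_0_compat; lra]).
  assert (heta1 : eta <= 1) by apply Rmin_l.
  assert (hseta : L * sqrt eta <= delta / 32).
  { assert (sqrt eta <= delta / (32 * L)).
    { rewrite <- (sqrt_pow2 (delta / (32 * L))) by (left; apply Rdiv_lt_0_compat; lra).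
      apply sqrt_le_1_alt. apply Rmin_r. }
    apply (Rmult_le_compat_l L) in H; [| lra]. replace (L * (delta / (32 * L))) with (delta / 32) in H by (field; lra). exact H. }
  assert (hseta2 : L * sqrt (2 * eta) <= delta / 16).
  { rewrite sqrt_mult by lra. assert (sqrt 2 <= 2).
    { rewrite <- (sqrt_pow2 2) at 2 by lra. apply sqrt_le_1_alt. lra. }
    assert (0 <= sqrt eta) by apply sqrt_pos.
    assert (0 <= L * sqrt eta) by (apply Rmult_le_pos; lra).
    assert (0 <= (2 - sqrt 2) * (L * sqrt eta)) by (apply Rmult_le_pos; lra).
    replace (L * (sqrt 2 * sqrt eta)) with (2 * (L * sqrt eta) - (2 - sqrt 2) * (L * sqrt eta)) by ring. lra. }
  assert (htau : 0 < tau) by (unfold tau; apply Rmin_case; [lra| apply pow_lt; apply Rdiv_lt_0_compat; lra]).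
  assert (htau1 : tau <= 1) by apply Rmin_l.
  assert (hstau : L * sqrt tau / 2 <= delta / 16).
  { assert (sqrt tau <= delta / (8 * L)).
    { rewrite <- (sqrt_pow2 (delta / (8 * L))) by (left; apply Rdiv_lt_0_compat; lra).
      apply sqrt_le_1_alt. apply Rmin_r. }
    apply (Rmult_le_compat_l L) in H; [| lra]. replace (L * (delta / (8 * L))) with (delta / 8) in H by (field; lra). lra. }
  assert (hstau1 : sqrt tau <= 1) by (rewrite <- sqrt_1; apply sqrt_le_1_alt; lra).
  assert (hell : 0 < ell) by (unfold ell; apply Rmin_case; apply Rdiv_lt_0_compat; lra).
  assert (hell3 : 3 * ell <= b - a) by (unfold ell; assert (Rmin ((b - a) / 3) (delta / (72 * K1)) <= (b - a) / 3) by apply Rmin_l; lra).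
  assert (hellK : ell * K1 <= delta / 72).
  { assert (ell <= delta / (72 * K1)) by apply Rmin_r.
    apply (Rmult_le_compat_r K1) in H; [| lra]. replace (delta / (72 * K1) * K1) with (delta / 72) in H by (field; lra). exact H. }
  destruct (Hconv eta heta) as [e1 [he1 Hc]].
  set (c3 := 3 + (4 * B + 4) / tau).
  set (c2 := 3 * ell * C / tau).
  set (cb := / (L * c3) * exp (- (C * L / tau))).
  set (ci := Rmin (ell / (2 * L * c3)) (ell ^ 3 * tau / (16 * L)) * exp (- (3 * c2)) * exp (- (C * L / tau))).
  assert (hc3 : 0 < c3) by (unfold c3; assert (0 <= (4 * B + 4) / tau) by (apply Rmult_le_pos; [lra| left; apply Rinv_0_lt_compat; lra]); lra).
  assert (hcb : 0 < cb) by (unfold cb; apply Rmult_lt_0_compat; [apply Rinv_0_lt_compat; nra| apply exp_pos]).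
  assert (hci : 0 < ci).
  { unfold ci. apply Rmult_lt_0_compat; [apply Rmult_lt_0_compat; [| apply exp_pos]| apply exp_pos].
    apply Rmin_case; apply Rdiv_lt_0_compat; try nra. apply Rmult_lt_0_compat; [apply pow_lt; lra| lra]. }
  set (eps0 := Rmin (Rmin e1 1) (Rmin (delta / (Rabs (ln cb) + 1)) (delta / (Rabs (ln ci) + 1)))).
  assert (hlb : 0 < Rabs (ln cb) + 1) by (assert (0 <= Rabs (ln cb)) by apply Rabs_pos; lra).
  assert (hli : 0 < Rabs (ln ci) + 1) by (assert (0 <= Rabs (ln ci)) by apply Rabs_pos; lra).
  exists eps0. split.
  { unfold eps0. repeat apply Rmin_case; try lra; apply Rdiv_lt_0_compat; lra. }
  intros eps heps heps0 heps1 E pr dpr d2pr pi dpi d2pi Hpsi h0 h1 h2 h3 hI.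
  assert (he1' : eps < e1).
  { assert (eps0 <= Rmin e1 1) by apply Rmin_l. assert (Rmin e1 1 <= e1) by apply Rmin_l. lra. }
  assert (hecb : eps * (Rabs (ln cb) + 1) <= delta).
  { assert (eps0 <= delta / (Rabs (ln cb) + 1)).
    { eapply Rle_trans; [apply Rmin_r| apply Rmin_l]. }
    apply (Rmult_le_reg_r (/ (Rabs (ln cb) + 1))). apply Rinv_0_lt_compat; lra.
    rewrite Rmult_assoc, Rinv_r by lra. rewrite Rmult_1_r. unfold Rdiv in H. lra. }
  assert (heci : eps * (Rabs (ln ci) + 1) <= delta).
  { assert (eps0 <= delta / (Rabs (ln ci) + 1)).
    { eapply Rle_trans; [apply Rmin_r| apply Rmin_r]. }
    apply (Rmult_le_reg_r (/ (Rabs (ln ci) + 1))). apply Rinv_0_lt_compat; lra.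
    rewrite Rmult_assoc, Rinv_r by lra. rewrite Rmult_1_r. unfold Rdiv in H. lra. }
  set (Ve := Veps eps). set (dVe := dVeps eps).
  destruct (HVeps eps (conj heps heps1)) as [HVed HVec].
  assert (Hcl := Hc eps (conj heps heps1) he1').
  change (Veps eps) with Ve in Hcl, Hpsi. change (dVeps eps) with dVe in Hcl.
  assert (HVe : forall x, 0 <= x <= L -> is_derive Ve x (dVe x) /\ Rabs (dVe x) <= C).
  { intros x hx. split; [apply HVed; auto|]. destruct (Hcl x hx) as [_ q]. assert (q2 := HM x hx).
    assert (q3 := abs_tri (dV x) (dVe x)). unfold C. lra. }
  assert (cVe : forall x, 0 <= x <= L -> continuity_pt Ve x).
  { intros x hx. apply (deriv_cont Ve x (dVe x)). apply HVed; auto. }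
  assert (bVe : forall x, 0 <= x <= L -> Rabs (Ve x) <= B + 1).
  { intros x hx. destruct (Hcl x hx) as [q _]. assert (q2 := HB x hx). assert (q3 := abs_tri (V x) (Ve x)). lra. }
  assert (cVV : forall x, 0 <= x <= L -> V x - eta <= Ve x <= V x + eta).
  { intros x hx. destruct (Hcl x hx) as [q _]. apply abs_le_iff in q. lra. }
  destruct (ustar L eps Ve E pr dpr d2pr pi dpi d2pi HL heps Hpsi h0 h1 h2 h3 hI) as [ys [hys [huys hWys]]].
  set (E' := Rmax E (V x0)).
  assert (hE1 : V x0 - eta <= E).
  { assert (q := cVV ys hys). assert (q2 := Hmin ys hys). lra. }
  assert (hE2 : - (B + 1) <= E).
  { assert (q := bVe ys hys). apply abs_le_iff in q. lra. }
  assert (hVys : V ys <= E' + eta).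
  { assert (q := cVV ys hys). assert (E <= E') by apply Rmax_l. lra. }
  set (f := fun s => sqrt (Rmax (V s - E') 0)).
  set (Ft := fun s => sqrt (Rmax (Ve (clamp L s) - E) 0)).
  assert (cf : forall s, 0 <= s <= L -> continuous f s).
  { intros s hs. unfold f. apply cont_sqmax. apply continuity_pt_filterlim.
    apply continuity_pt_minus. apply cV; auto. apply continuity_pt_const. intros u v; reflexivity. }
  assert (cFt : forall s, continuous Ft s).
  { intro z. unfold Ft. apply cont_sqmax. apply continuity_pt_filterlim.
    apply (clamp_cont L (fun t => Ve t - E)); [lra|]. intros t ht'.
    apply continuity_pt_minus. apply cVe; auto.
    apply continuity_pt_const. intros u v; reflexivity. }
  assert (FtF : forall s, 0 <= s <= L -> 0 <= Ft s /\ 0 <= f s /\ Ft s <= f s + sqrt (2 * eta)).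
  { intros s hs. unfold Ft, f. rewrite clamp_id by auto. split; [apply sqrt_pos| split; [apply sqrt_pos|]].
    eapply Rle_trans; [| apply sqrt_add_le; [apply Rmax_r| lra]].
    apply sqrt_le_1_alt. assert (q := cVV s hs).
    assert (E' - eta <= E).
    { unfold E'. unfold Rmax. destruct Rle_dec; lra. }
    unfold Rmax. repeat destruct Rle_dec; lra. }
  assert (FtB : forall s, 0 <= s <= L -> 0 <= Ft s /\ 0 <= 0 /\ Ft s <= 0 + sqrt (2 * B + 2)).
  { intros s hs. unfold Ft. rewrite clamp_id by auto. split; [apply sqrt_pos| split; [lra|]].
    rewrite Rplus_0_l. apply sqrt_le_1_alt. assert (q := bVe s hs). apply abs_le_iff in q.
    unfold Rmax. destruct Rle_dec; lra. }
  set (k0 := sqrt tau / eps + C / tau).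
  set (Afn := Af eps Ve E tau pr dpr pi dpi).
  assert (AC : forall x y, 0 <= x <= L -> 0 <= y <= L ->
     Afn y * exp (-((2/eps) * Rabs (RInt Ft y x) + k0 * Rabs (x - y))) <= Afn x).
  { intros x y hx hy. exact (A_compare L eps Ve dVe E tau C pr dpr d2pr pi dpi d2pi ltac:(lra) heps htau Hpsi HVe x y hx hy). }
  set (mys := mf Ve E tau ys).
  destruct (mf_facts Ve E tau ys htau) as [hmys1 [hmys2 hmys3]]. fold mys in hmys1, hmys2, hmys3.
  assert (Ays : mys / L <= Afn ys).
  { unfold Afn, Af. fold mys. assert (0 <= eps ^ 2 * (dpr ys ^ 2 + dpi ys ^ 2)) by (apply Rmult_le_pos; [apply pow2_ge_0| nra]).
    assert (mys * (1 / L) <= mys * (pr ys ^ 2 + pi ys ^ 2)) by (apply Rmult_le_compat_l; lra).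
    unfold Rdiv in *. lra. }
  set (mu := 2 * (Rabs E + B + 1) + tau).
  assert (hEabs : Rabs E <= mys + B + 1).
  { assert (q := bVe ys hys). apply abs_le_iff in q. apply abs_le_iff in hmys2.
    unfold Rabs. destruct Rcase_abs; lra. }
  assert (hmu : mu <= c3 * mys).
  { unfold mu, c3. assert (1 <= mys / tau) by (apply (Rmult_le_reg_r tau); auto; unfold Rdiv; rewrite Rmult_assoc, Rinv_l; lra).
    assert ((4 * B + 4) / tau * mys = (4 * B + 4) * (mys / tau)) by (field; lra).
    assert ((4 * B + 4) <= (4 * B + 4) * (mys / tau)) by nra. nra. }
  assert (hmu0 : 0 < mu) by (unfold mu; assert (0 <= Rabs E) by apply Rabs_pos; lra).
  assert (hEmu : Rabs E + 1 <= mu) by (unfold mu; assert (0 <= Rabs E) by apply Rabs_pos; lra).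
  assert (Hmu : forall t, 0 <= t <= L -> mf Ve E tau t - (Ve t - E) <= mu).
  { intros t ht. destruct (mf_facts Ve E tau t htau) as [_ [_ q]].
    assert (q2 := bVe t ht). assert (q3 := Rabs_triang (Ve t) (- E)). rewrite Rabs_Ropp in q3.
    assert (- (Ve t - E) <= Rabs (Ve t - E)) by (rewrite <- Rabs_Ropp; apply Rle_abs).
    unfold mu, Rminus in *. lra. }
  assert (exf : forall p q, 0 <= p <= L -> 0 <= q <= L -> ex_RInt f p q).
  { intros p q hp hq. apply (@ex_RInt_continuous R_CompleteNormedModule). intros z hz. apply cf. apply (mm_in L p q z); auto. }
  assert (Dist : forall x, 0 <= x <= L -> (2 / eps) * Rabs (RInt Ft ys x) + k0 * Rabs (x - ys) <=
     (2 / eps) * (agmon_dist L V x0 E x + gam + L * sqrt eta + L * sqrt (2 * eta) + L * sqrt tau / 2) + C * L / tau).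
  { intros x hx.
    assert (hx0' : 0 <= x0 <= L) by lra.
    destruct (glb_approx (fun r => exists y, 0 <= y <= L /\ V y <= E' /\ r = agmon_int V E' y x)
                (agmon_int V E' x0 x) (ex_intro _ x0 (conj hx0' (conj (Rmax_r _ _) eq_refl))))
      as [_ GA].
    { intros r [y [_ [_ ->]]]. apply Rabs_pos. }
    destruct (GA gam ltac:(unfold gam; lra)) as [r [[z [hz [hVz ->]]] hr]].
    change (real (Glb_Rbar (fun r => exists y, 0 <= y <= L /\ V y <= E' /\ r = agmon_int V E' y x)))
      with (agmon_dist L V x0 E x) in hr.
    change (agmon_int V E' z x) with (Rabs (RInt f z x)) in hr.
    assert (s1 : Rabs (RInt Ft ys x) <= Rabs (RInt f ys x) + sqrt (2 * eta) * Rabs (x - ys)).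
    { apply int_cmp. apply sqrt_pos.
      - intros s hs. apply cFt.
      - intros s hs. apply cf. apply (mm_in L ys x s); auto.
      - intros s hs. apply FtF. apply (mm_in L ys x s); auto. }
    assert (s2 : RInt f ys x = RInt f ys z + RInt f z x).
    { symmetry. exact (RInt_Chasles f ys z x (exf ys z hys hz) (exf z x hz hx)). }
    assert (s3 : Rabs (RInt f ys z) <= Rabs (RInt (fun _ => 0) ys z) + sqrt eta * Rabs (z - ys)).
    { apply int_cmp. apply sqrt_pos.
      - intros s hs. apply cf. apply (mm_in L ys z s); auto.
      - intros s hs. apply continuous_const.
      - intros s hs. assert (hs' := mm_in L ys z s hys hz hs).
        assert (V s <= E' + eta) by (apply (V_between L V dV x0 HL HVsave Hx0 Hcrit Hmin ys z s); auto; lra).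
        split; [apply sqrt_pos| split; [lra|]]. rewrite Rplus_0_l. unfold f. apply sqrt_le_1_alt.
        unfold Rmax. destruct Rle_dec; lra. }
    rewrite RInt_zero, Rabs_R0, Rplus_0_l in s3.
    assert (Rabs (x - ys) <= L) by (unfold Rabs; destruct Rcase_abs; lra).
    assert (Rabs (z - ys) <= L) by (unfold Rabs; destruct Rcase_abs; lra).
    assert (0 <= sqrt eta) by apply sqrt_pos. assert (0 <= sqrt (2 * eta)) by apply sqrt_pos.
    assert (sqrt (2 * eta) * Rabs (x - ys) <= L * sqrt (2 * eta)) by nra.
    assert (sqrt eta * Rabs (z - ys) <= L * sqrt eta) by nra.
    assert (Rabs (RInt f ys x) <= Rabs (RInt f ys z) + Rabs (RInt f z x)) by (rewrite s2; apply Rabs_triang).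
    assert (T : Rabs (RInt Ft ys x) <= agmon_dist L V x0 E x + gam + L * sqrt eta + L * sqrt (2 * eta)) by lra.
    assert (hk0 : 0 <= k0).
    { unfold k0. assert (0 <= sqrt tau) by apply sqrt_pos. assert (0 <= C) by (unfold C; lra).
      assert (0 <= sqrt tau / eps) by (apply Rmult_le_pos; [lra| left; apply Rinv_0_lt_compat; lra]).
      assert (0 <= C / tau) by (apply Rmult_le_pos; [lra| left; apply Rinv_0_lt_compat; lra]). lra. }
    assert (k0 * Rabs (x - ys) <= k0 * L) by (apply Rmult_le_compat_l; auto).
    assert (he2 : 0 <= 2 / eps) by (apply Rmult_le_pos; [lra| left; apply Rinv_0_lt_compat; lra]).
    apply (Rmult_le_compat_l (2 / eps)) in T; auto.
    assert (k0 * L = 2 / eps * (L * sqrt tau / 2) + C * L / tau) by (unfold k0; field; lra).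
    lra. }
  assert (budget : gam + L * sqrt eta + L * sqrt (2 * eta) + L * sqrt tau / 2 <= delta / 2 - delta / 8).
  { unfold gam. lra. }
  assert (he2 : 0 < 2 / eps) by (apply Rdiv_lt_0_compat; lra).
  assert (Bnd : forall xb, 0 <= xb <= L -> pr xb = 0 -> pi xb = 0 ->
     eps / sqrt (Rabs E + 1) * sqrt (dpr xb ^ 2 + dpi xb ^ 2) >= exp (- (agmon_dist L V x0 E xb + delta) / eps)).
  { intros xb hxb hp hq.
    assert (a1 := AC xb ys hxb hys). assert (d1 := Dist xb hxb).
    set (d := agmon_dist L V x0 E xb) in *.
    set (Z := 2 / eps * (d + delta / 2) + C * L / tau).
    assert (ez : exp (- Z) <= exp (- (2 / eps * Rabs (RInt Ft ys xb) + k0 * Rabs (xb - ys)))).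
    { apply exp_mono. unfold Z. apply Ropp_le_contravar.
      assert (2 / eps * (d + gam + L * sqrt eta + L * sqrt (2 * eta) + L * sqrt tau / 2) <= 2 / eps * (d + delta / 2))
        by (apply Rmult_le_compat_l; lra). lra. }
    assert (A1 : mys / L * exp (- Z) <= Afn xb).
    { eapply Rle_trans; [| exact a1]. apply Rmult_le_compat; auto.
      apply Rdiv_le_0_compat; lra. left; apply exp_pos. }
    assert (A0 : Afn xb = eps ^ 2 * (dpr xb ^ 2 + dpi xb ^ 2)) by (unfold Afn, Af; rewrite hp, hq; ring).
    set (P := dpr xb ^ 2 + dpi xb ^ 2) in *.
    set (Q := Rabs E + 1).
    assert (hQ : 0 < Q) by (unfold Q; assert (0 <= Rabs E) by apply Rabs_pos; lra).
    assert (hP : 0 <= P) by (unfold P; nra).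
    assert (K : cb * exp (- (2 / eps) * (d + delta / 2)) <= eps ^ 2 * P / Q).
    { assert (e : cb * exp (- (2 / eps) * (d + delta / 2)) = / (L * c3) * exp (- Z)).
      { unfold cb, Z. rewrite Rmult_assoc, <- exp_plus. f_equal. f_equal. field. split; lra. }
      rewrite e. apply (Rmult_le_reg_r Q); auto.
      replace (eps ^ 2 * P / Q * Q) with (eps ^ 2 * P) by (field; lra).
      rewrite <- A0. eapply Rle_trans; [| exact A1].
      assert (Q <= c3 * mys) by (unfold Q; lra).
      assert (0 < exp (- Z)) by apply exp_pos.
      replace (/ (L * c3) * exp (- Z) * Q) with ((Q / c3) / L * exp (- Z)) by (field; split; lra).
      apply Rmult_le_compat_r; [lra|]. unfold Rdiv. apply Rmult_le_compat_r; [left; apply Rinv_0_lt_compat; lra|].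
      apply (Rmult_le_reg_l c3); auto. replace (c3 * (Q * / c3)) with Q by (field; lra). lra. }
    assert (F := final_exp cb eps d delta (eps ^ 2 * P / Q) hcb heps hdelta hecb K).
    apply Rle_ge.
    replace (eps / sqrt Q * sqrt P) with (sqrt (eps ^ 2 * P / Q)).
    - apply sq_final. apply Rmult_le_pos; [apply Rmult_le_pos; [apply pow2_ge_0| lra]| left; apply Rinv_0_lt_compat; lra].
      replace (2 * (- (d + delta) / eps)) with (- (2 / eps) * (d + delta)) by (field; lra). exact F.
    - rewrite sqrt_div_alt by lra. rewrite sqrt_mult_alt by apply pow2_ge_0. rewrite sqrt_pow2 by lra.
      field. assert (0 < sqrt Q) by (apply sqrt_lt_R0; lra). lra. }
  split; [| split].
  3: { apply Bnd; auto; lra. }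
  2: { apply Bnd; auto; lra. }
  assert (dnn : forall x, 0 <= agmon_dist L V x0 E x).
  { intro x. assert (hx0' : 0 <= x0 <= L) by lra.
    destruct (glb_approx (fun r => exists y, 0 <= y <= L /\ V y <= E' /\ r = agmon_int V E' y x)
                (agmon_int V E' x0 x) (ex_intro _ x0 (conj hx0' (conj (Rmax_r _ _) eq_refl))))
      as [G0 _].
    { intros r [y [_ [_ ->]]]. apply Rabs_pos. }
    exact G0. }
  destruct (glb_approx (fun r => exists x, U x /\ r = agmon_dist L V x0 E x)
              (agmon_dist L V x0 E ((a + b) / 2)) (ex_intro _ ((a + b) / 2) (conj (HU1 ((a + b) / 2) ltac:(lra)) eq_refl)))
    as [_ GU].
  { intros r [x [_ ->]]. apply dnn. }
  destruct (GU gam ltac:(unfold gam; lra)) as [r [[x1 [hU1 ->]] hr]].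
  change (real (Glb_Rbar (fun r => exists x, U x /\ r = agmon_dist L V x0 E x))) with (agmon_dist_set L V x0 E U) in hr.
  set (dU := agmon_dist_set L V x0 E U) in *.
  assert (hx1 := HU2 x1 hU1).
  assert (hx1' : 0 <= x1 <= L) by lra.
  set (s1 := Rmin x1 (b - 3 * ell)).
  assert (hs1a : a <= s1) by (unfold s1; apply Rmin_case; lra).
  assert (hs1b : s1 + 3 * ell <= b) by (unfold s1; assert (Rmin x1 (b - 3 * ell) <= b - 3 * ell) by apply Rmin_r; lra).
  assert (hs1x : forall t, s1 <= t <= s1 + 3 * ell -> Rabs (t - x1) <= 3 * ell).
  { intros t ht. unfold s1 in ht. unfold Rmin in ht. destruct Rle_dec in ht; unfold Rabs; destruct Rcase_abs; lra. }
  set (YY := 3 * ell * (2 * sqrt (2 * B + 2) + sqrt tau) / eps + c2).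
  assert (hYY : forall p q, 0 <= p <= L -> 0 <= q <= L -> Rabs (q - p) <= 3 * ell ->
             2 / eps * Rabs (RInt Ft p q) + k0 * Rabs (q - p) <= YY).
  { intros p q hp hq hpq.
    assert (s3 : Rabs (RInt Ft p q) <= Rabs (RInt (fun _ => 0) p q) + sqrt (2 * B + 2) * Rabs (q - p)).
    { apply int_cmp. apply sqrt_pos.
      - intros z hz. apply cFt.
      - intros z hz. apply continuous_const.
      - intros z hz. apply FtB. apply (mm_in L p q z); auto. }
    rewrite RInt_zero, Rabs_R0, Rplus_0_l in s3.
    assert (0 <= sqrt (2 * B + 2)) by apply sqrt_pos.
    assert (Rabs (RInt Ft p q) <= sqrt (2 * B + 2) * (3 * ell)) by nra.
    assert (hk0 : 0 <= k0).
    { unfold k0. assert (0 <= sqrt tau) by apply sqrt_pos. assert (0 <= C) by (unfold C; lra).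
      assert (0 <= sqrt tau / eps) by (apply Rmult_le_pos; [lra| left; apply Rinv_0_lt_compat; lra]).
      assert (0 <= C / tau) by (apply Rmult_le_pos; [lra| left; apply Rinv_0_lt_compat; lra]). lra. }
    assert (k0 * Rabs (q - p) <= k0 * (3 * ell)) by (apply Rmult_le_compat_l; auto).
    apply (Rmult_le_compat_l (2 / eps)) in H0; [| lra].
    assert (YY = 2 / eps * (sqrt (2 * B + 2) * (3 * ell)) + k0 * (3 * ell)) by (unfold YY, k0, c2; field; lra).
    lra. }
  assert (Apos : forall t, 0 <= Afn t).
  { intro t. unfold Afn, Af. assert (0 <= mf Ve E tau t) by apply sqrt_pos.
    assert (0 <= eps ^ 2 * (dpr t ^ 2 + dpi t ^ 2)) by (apply Rmult_le_pos; [apply pow2_ge_0| nra]).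
    assert (0 <= mf Ve E tau t * (pr t ^ 2 + pi t ^ 2)) by (apply Rmult_le_pos; nra). lra. }
  set (X1 := 2 / eps * Rabs (RInt Ft ys x1) + k0 * Rabs (x1 - ys)).
  assert (Ax1 : mys / L * exp (- X1) <= Afn x1).
  { eapply Rle_trans; [| apply (AC x1 ys hx1' hys)]. apply Rmult_le_compat_r; [left; apply exp_pos| exact Ays]. }
  assert (hmysL : 0 < mys / L) by (apply Rdiv_lt_0_compat; lra).
  assert (hA1 : 0 < Afn x1) by (assert (0 < mys / L * exp (- X1)) by (apply Rmult_lt_0_compat; [lra| apply exp_pos]); lra).
  set (alo := Afn x1 * exp (- YY)). set (ahi := Afn x1 * exp YY).
  assert (HA : forall t, s1 <= t <= s1 + 3 * ell -> alo <= Afn t <= ahi).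
  { intros t ht. assert (htL : 0 <= t <= L) by lra. assert (q := hs1x t ht).
    split.
    - eapply Rle_trans; [| apply (AC t x1 htL hx1')].
      apply Rmult_le_compat_l. lra. apply exp_mono. apply Ropp_le_contravar. apply hYY; auto.
    - assert (w := AC x1 t hx1' htL).
      assert (w2 : exp (- YY) <= exp (- (2 / eps * Rabs (RInt Ft t x1) + k0 * Rabs (x1 - t)))).
      { apply exp_mono. apply Ropp_le_contravar. apply hYY; auto. rewrite <- Rabs_Ropp. replace (- (x1 - t)) with (t - x1) by ring. auto. }
      assert (w3 : Afn t * exp (- YY) <= Afn x1).
      { eapply Rle_trans; [| exact w]. apply Rmult_le_compat_l; auto. }
      apply (Rmult_le_compat_r (exp YY)) in w3; [| left; apply exp_pos].
      rewrite Rmult_assoc, <- exp_plus, Rplus_opp_l, exp_0, Rmult_1_r in w3. exact w3. }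
  set (S := RInt (fun x => pr x ^ 2 + pi x ^ 2) a b).
  assert (exS : ex_RInt (fun x => pr x ^ 2 + pi x ^ 2) a b).
  { apply (@ex_RInt_continuous R_CompleteNormedModule). intros z hz.
    rewrite Rmin_left, Rmax_right in hz by lra.
    destruct (Hpsi z ltac:(lra)) as [q1 [_ [q3 _]]].
    apply (@ex_derive_continuous R_AbsRing R_NormedModule). auto_derive. repeat split; eexists; eassumption. }
  assert (hS0 : 0 <= S) by (apply RInt_ge_0; [lra| exact exS| intros; nra]).
  assert (halo : 0 < alo) by (unfold alo; apply Rmult_lt_0_compat; [lra| apply exp_pos]).
  assert (hahi : 0 < ahi) by (unfold ahi; apply Rmult_lt_0_compat; [lra| apply exp_pos]).
  assert (IN := interior_bound L a b s1 ell eps Ve E tau alo ahi mu pr dpr d2pr pi dpi d2pi ltac:(lra) ltac:(lra)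
     ha hs1a hs1b hbL hell heps htau Hpsi cVe HA (fun t ht => Hmu t ltac:(lra))).
  fold S in IN.
  assert (QD := quad ell alo mu eps ahi S hell halo hmu0 heps hahi hS0 IN).
  set (EX := exp (- X1 - 3 * YY)).
  assert (hEX : 0 < EX) by apply exp_pos.
  assert (hYY0 : 0 <= YY).
  { unfold YY, c2. assert (0 <= sqrt (2 * B + 2)) by apply sqrt_pos. assert (0 <= sqrt tau) by apply sqrt_pos.
    assert (0 <= C) by (unfold C; lra).
    assert (0 <= 3 * ell * (2 * sqrt (2 * B + 2) + sqrt tau) / eps) by (apply Rdiv_le_0_compat; nra).
    assert (0 <= 3 * ell * C / tau) by (apply Rdiv_le_0_compat; nra). lra. }
  assert (aloEX : mys / L * EX <= alo).
  { unfold alo. eapply Rle_trans; [| apply Rmult_le_compat_r; [left; apply exp_pos| exact Ax1]].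
    rewrite Rmult_assoc, <- exp_plus. apply Rmult_le_compat_l; [lra|]. unfold EX. apply exp_mono. lra. }
  assert (T1b : ell / (2 * L * c3) * EX <= ell * alo / (2 * mu)).
  { assert (ell * alo / (2 * (c3 * mys)) <= ell * alo / (2 * mu)).
    { unfold Rdiv. apply Rmult_le_compat_l; [nra|]. apply Rinv_le_contravar; lra. }
    eapply Rle_trans; [| exact H].
    replace (ell / (2 * L * c3) * EX) with (ell * (mys / L * EX) / (2 * (c3 * mys))) by (field; repeat split; lra).
    unfold Rdiv. apply Rmult_le_compat_r; [left; apply Rinv_0_lt_compat; nra|]. apply Rmult_le_compat_l; lra. }
  assert (T2b : ell ^ 3 * tau / (16 * L) * EX <= ell ^ 3 * alo ^ 2 / (16 * eps ^ 2 * ahi)).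
  { set (W := Afn x1 * exp (- (3 * YY))).
    assert (ee : exp (- YY) * exp (- YY) = exp YY * exp (- (3 * YY))) by (rewrite <- !exp_plus; f_equal; ring).
    assert (e : ell ^ 3 * alo ^ 2 / (16 * eps ^ 2 * ahi) = ell ^ 3 * W / (16 * eps ^ 2)).
    { unfold alo, ahi, W. simpl. rewrite !Rmult_1_r.
      replace (Afn x1 * exp (- YY) * (Afn x1 * exp (- YY))) with (Afn x1 * Afn x1 * (exp (- YY) * exp (- YY))) by ring.
      rewrite ee. field. split; [| split]; try lra. apply Rgt_not_eq, exp_pos. }
    rewrite e.
    assert (hW : mys / L * EX <= W).
    { unfold W, EX. eapply Rle_trans; [| apply Rmult_le_compat_r; [left; apply exp_pos| exact Ax1]].
      rewrite Rmult_assoc, <- exp_plus. right; f_equal; try f_equal; try ring. }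
    assert (tau / L * EX <= mys / L * EX).
    { apply Rmult_le_compat_r; [lra|]. unfold Rdiv. apply Rmult_le_compat_r; [left; apply Rinv_0_lt_compat; lra| lra]. }
    assert (he2' : 0 < eps ^ 2) by (apply pow_lt; lra).
    assert (he21 : eps ^ 2 <= 1) by (simpl; nra).
    assert (hl3 : 0 < ell ^ 3) by (apply pow_lt; lra).
    assert (ell ^ 3 * W / 16 <= ell ^ 3 * W / (16 * eps ^ 2)).
    { assert (0 < mys / L * EX) by (apply Rmult_lt_0_compat; lra).
      unfold Rdiv. apply Rmult_le_compat_l; [apply Rmult_le_pos; lra|]. apply Rinv_le_contravar; nra. }
    replace (ell ^ 3 * tau / (16 * L) * EX) with (ell ^ 3 * (tau / L * EX) / 16) by (field; lra).
    assert (ell ^ 3 * (tau / L * EX) <= ell ^ 3 * W) by (apply Rmult_le_compat_l; lra).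
    lra. }
  set (mn := Rmin (ell / (2 * L * c3)) (ell ^ 3 * tau / (16 * L))).
  assert (mnS : mn * EX <= S).
  { eapply Rle_trans; [| exact QD]. apply Rmin_glb.
    - eapply Rle_trans; [| exact T1b]. apply Rmult_le_compat_r; [lra| apply Rmin_l].
    - eapply Rle_trans; [| exact T2b]. apply Rmult_le_compat_r; [lra| apply Rmin_r]. }
  assert (EXb : exp (- (2 / eps) * (dU + delta / 2)) * exp (- (3 * c2)) * exp (- (C * L / tau)) <= EX).
  { rewrite <- !exp_plus. unfold EX. apply exp_mono.
    assert (d1 := Dist x1 hx1'). fold X1 in d1.
    assert (3 * YY <= 2 / eps * (delta / 16) + 3 * c2).
    { unfold YY. assert (9 * ell * (2 * sqrt (2 * B + 2) + sqrt tau) <= delta / 8).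
      { assert (ell * (2 * sqrt (2 * B + 2) + sqrt tau) <= ell * K1) by (apply Rmult_le_compat_l; unfold K1; lra). lra. }
      assert (e : 3 * (3 * ell * (2 * sqrt (2 * B + 2) + sqrt tau) / eps + c2) = (9 * ell * (2 * sqrt (2 * B + 2) + sqrt tau)) / eps + 3 * c2) by (field; lra).
      rewrite e. assert (e2 : 2 / eps * (delta / 16) = (delta / 8) / eps) by (field; lra). rewrite e2.
      unfold Rdiv at 1 3. assert ((9 * ell * (2 * sqrt (2 * B + 2) + sqrt tau)) * / eps <= (delta / 8) * / eps).
      { apply Rmult_le_compat_r; [left; apply Rinv_0_lt_compat; lra| lra]. } lra. }
    assert (2 / eps * (agmon_dist L V x0 E x1 + gam + L * sqrt eta + L * sqrt (2 * eta) + L * sqrt tau / 2) + 2 / eps * (delta / 16)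
            <= 2 / eps * (dU + delta / 2)).
    { rewrite <- Rmult_plus_distr_l. apply Rmult_le_compat_l; [lra|]. unfold gam in *. lra. }
    lra. }
  assert (Sb : ci * exp (- (2 / eps) * (dU + delta / 2)) <= S).
  { eapply Rle_trans; [| exact mnS]. unfold ci. fold mn.
    replace (mn * exp (- (3 * c2)) * exp (- (C * L / tau)) * exp (- (2 / eps) * (dU + delta / 2)))
      with (mn * (exp (- (2 / eps) * (dU + delta / 2)) * exp (- (3 * c2)) * exp (- (C * L / tau)))) by ring.
    apply Rmult_le_compat_l; [| exact EXb]. unfold mn. apply Rmin_case; left; apply Rdiv_lt_0_compat; try nra.
    apply Rmult_lt_0_compat; [apply pow_lt; lra| lra]. }
  assert (F := final_exp ci eps dU delta S hci heps hdelta heci Sb).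
  apply Rle_ge. apply sq_final; auto.
  replace (2 * (- (dU + delta) / eps)) with (- (2 / eps) * (dU + delta)) by (field; lra). exact F.
Qed.
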